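(* Any timelike minimal surface in $\mathbb{L}^3$ without singularities is locally a graph of a function over the $x$-$z$ plane or over the $y$-$z$ plane, i.e. locally of the form $(x,\psi(x,z),z)$ or $(\psi(y,z),y,z)$, and the height function $\psi$ is a Born-Infeld soliton (in the variables $(x,z)$, respectively $(y,z)$).
   Context: $\mathbb{L}^3$ denotes $\mathbb{R}^3$ with the Lorentzian metric $ds^2=dx^2+dy^2-dz^2$. A surface is timelike if its induced metric is Lorentzian, and minimal if its mean curvature vanishes; ''without singularities'' means it is a regular immersion with nondegenerate (timelike) induced metric everywhere. A function $\psi$ on an open set of the $(u,v)$-plane is a Born-Infeld soliton (in the variables $u,v$) if $(1-\psi_v^2)\psi_{uu}+2\psi_u\psi_v\psi_{uv}-(1+\psi_u^2)\psi_{vv}=0$. *)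

(* Defs.v *)
From Stdlib Require Import Reals.
From Coquelicot Require Import Coquelicot.
Open Scope R_scope.

Definition open2 (U : R -> R -> Prop) : Prop :=
  open (fun p : R * R => U (fst p) (snd p)).

Definition d1 (g : R -> R -> R) : R -> R -> R :=
  fun u v => Derive (fun t => g t v) u.
Definition d2 (g : R -> R -> R) : R -> R -> R :=
  fun u v => Derive (fun t => g u t) v.

Definition cont_on (U : R -> R -> Prop) (g : R -> R -> R) : Prop :=
  forall u v, U u v -> continuous (fun p : R * R => g (fst p) (snd p)) (u, v).

Fixpoint Ck (k : nat) (U : R -> R -> Prop) (g : R -> R -> R) : Prop :=
  match k with
  | O => cont_on U g
  | S k' =>
      cont_on U g /\
      (forall u v, U u v -> ex_derive (fun t => g t v) u /\ ex_derive (fun t => g u t) v) /\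
      Ck k' U (d1 g) /\ Ck k' U (d2 g)
  end.

Definition smooth_on (U : R -> R -> Prop) (g : R -> R -> R) : Prop :=
  forall k, Ck k U g.

Definition lprod (a1 a2 a3 b1 b2 b3 : R) : R := a1 * b1 + a2 * b2 - a3 * b3.

Section Surface.
Variables X Y Z : R -> R -> R.

Definition E_ff u v := lprod (d1 X u v) (d1 Y u v) (d1 Z u v) (d1 X u v) (d1 Y u v) (d1 Z u v).
Definition F_ff u v := lprod (d1 X u v) (d1 Y u v) (d1 Z u v) (d2 X u v) (d2 Y u v) (d2 Z u v).
Definition G_ff u v := lprod (d2 X u v) (d2 Y u v) (d2 Z u v) (d2 X u v) (d2 Y u v) (d2 Z u v).

(** regular immersion: f_u and f_v linearly independent (Euclidean cross
    product nonzero) *)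
Definition regular_at u v : Prop :=
  let a1 := d1 X u v in let a2 := d1 Y u v in let a3 := d1 Z u v in
  let b1 := d2 X u v in let b2 := d2 Y u v in let b3 := d2 Z u v in
  (a2 * b3 - a3 * b2 <> 0) \/ (a3 * b1 - a1 * b3 <> 0) \/ (a1 * b2 - a2 * b1 <> 0).

(** timelike: the induced metric is Lorentzian (negative determinant) *)
Definition timelike_at u v : Prop := E_ff u v * G_ff u v - F_ff u v ^ 2 < 0.

(** Lorentzian cross product f_u x_L f_v (Lorentz-orthogonal to f_u and f_v) *)
Definition N1 u v := d1 Y u v * d2 Z u v - d1 Z u v * d2 Y u v.
Definition N2 u v := d1 Z u v * d2 X u v - d1 X u v * d2 Z u v.
Definition N3 u v := - (d1 X u v * d2 Y u v - d1 Y u v * d2 X u v).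

Definition nrm u v := sqrt (Rabs (lprod (N1 u v) (N2 u v) (N3 u v) (N1 u v) (N2 u v) (N3 u v))).
Definition n1 u v := N1 u v / nrm u v.
Definition n2 u v := N2 u v / nrm u v.
Definition n3 u v := N3 u v / nrm u v.

Definition L_sf u v := lprod (d1 (d1 X) u v) (d1 (d1 Y) u v) (d1 (d1 Z) u v) (n1 u v) (n2 u v) (n3 u v).
Definition M_sf u v := lprod (d2 (d1 X) u v) (d2 (d1 Y) u v) (d2 (d1 Z) u v) (n1 u v) (n2 u v) (n3 u v).
Definition N_sf u v := lprod (d2 (d2 X) u v) (d2 (d2 Y) u v) (d2 (d2 Z) u v) (n1 u v) (n2 u v) (n3 u v).

Definition mean_curv u v : R :=
  (E_ff u v * N_sf u v - 2 * F_ff u v * M_sf u v + G_ff u v * L_sf u v)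
  / (2 * (E_ff u v * G_ff u v - F_ff u v ^ 2)).

Definition timelike_minimal_surface (U : R -> R -> Prop) : Prop :=
  open2 U /\ smooth_on U X /\ smooth_on U Y /\ smooth_on U Z /\
  (forall u v, U u v -> regular_at u v /\ timelike_at u v /\ mean_curv u v = 0).

End Surface.

Definition born_infeld (D : R -> R -> Prop) (psi : R -> R -> R) : Prop :=
  Ck 2 D psi /\
  forall u v, D u v ->
    (1 - d2 psi u v ^ 2) * d1 (d1 psi) u v
    + 2 * d1 psi u v * d2 psi u v * d1 (d2 psi) u v
    - (1 + d1 psi u v ^ 2) * d2 (d2 psi) u v = 0.

(* Main.v *)
From Pilot Require Import Defs.
From Stdlib Require Import Reals Lra Lia ClassicalEpsilon Classical.
From Coquelicot Require Import Coquelicot.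
Import Pilot.Defs.
Open Scope R_scope.


Lemma open2_loc U u v : open2 U -> U u v -> locally_2d U u v.
Proof.
  intros HU Huv. apply locally_2d_locally. apply (HU (u,v)). exact Huv.
Qed.

Lemma loc_open2 (W : R -> R -> Prop) : (forall u v, W u v -> locally_2d W u v) -> open2 W.
Proof.
  intros H [u v] Hw. apply (proj1 (locally_2d_locally W u v)). apply H; exact Hw.
Qed.

Lemma cont_2d g u v :
  continuous (fun p : R * R => g (fst p) (snd p)) (u, v) -> continuity_2d_pt g u v.
Proof. intros H. apply continuity_2d_pt_filterlim. exact H. Qed.

Lemma cont_2d' g u v :
  continuity_2d_pt g u v -> continuous (fun p : R * R => g (fst p) (snd p)) (u, v).
Proof. intros H. apply (continuity_2d_pt_filterlim g u v). exact H. Qed.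

Lemma locally_2d_and (P Q : R -> R -> Prop) x y :
  locally_2d P x y -> locally_2d Q x y -> locally_2d (fun u v => P u v /\ Q u v) x y.
Proof.
  intros [d1 H1] [d2 H2].
  assert (Hd : 0 < Rmin d1 d2) by (apply Rmin_pos; apply cond_pos).
  exists (mkposreal _ Hd). simpl. intros u v Hu Hv.
  split; [apply H1|apply H2];
  eapply Rlt_le_trans; eauto; try apply Rmin_l; try apply Rmin_r.
Qed.

Lemma Ck_S k U g : Ck (S k) U g -> Ck k U g.
Proof.
  revert g. induction k as [|k IH]; intros g H.
  - simpl in H. tauto.
  - destruct H as [H0 [H1 [H2 H3]]]. split; [exact H0|]. split; [exact H1|].
    split; apply IH; assumption.
Qed.

Lemma Ck_le k n U g : (k <= n)%nat -> Ck n U g -> Ck k U g.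
Proof.
  intros Hle. induction Hle; auto. intros H. apply IHHle. apply Ck_S. exact H.
Qed.

Record C1at (g : R -> R -> R) (u v : R) : Prop := {
  c1_cont : continuity_2d_pt g u v;
  c1_ex1 : ex_derive (fun t => g t v) u;
  c1_ex2 : ex_derive (fun t => g u t) v;
  c1_cd1 : continuity_2d_pt (d1 g) u v;
  c1_cd2 : continuity_2d_pt (d2 g) u v }.

Lemma C1_of U g : Ck 1 U g -> forall u v, U u v -> C1at g u v.
Proof.
  intros [H0 [H1 [H2 H3]]] u v Huv. simpl in H2, H3.
  destruct (H1 u v Huv). constructor; auto; apply cont_2d; auto.
Qed.

Lemma Rmin_Rmax_between a b c x r :
  Rmin a b <= c <= Rmax a b -> Rabs (a - x) < r -> Rabs (b - x) < r -> Rabs (c - x) < r.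
Proof.
  unfold Rmin, Rmax. destruct (Rle_dec a b); intros [h1 h2] ha hb;
  apply Rabs_def1; apply Rabs_def2 in ha; apply Rabs_def2 in hb; lra.
Qed.

Lemma Rmin_Rmax_between' a b c :
  Rmin a b <= c <= Rmax a b -> Rabs (c - a) <= Rabs (b - a).
Proof.
  unfold Rmin, Rmax. destruct (Rle_dec a b); intros [h1 h2];
  unfold Rabs; repeat destruct Rcase_abs; lra.
Qed.

Lemma mvt1 (f : R -> R) a b :
  (forall t, Rmin a b <= t <= Rmax a b -> ex_derive f t) ->
  exists c, Rmin a b <= c <= Rmax a b /\ f b - f a = Derive f c * (b - a).
Proof.
  intros H. apply MVT_gen.
  - intros x Hx. apply Derive_correct. apply H. lra.
  - intros x Hx. apply continuity_pt_filterlim. apply (@ex_derive_continuous R_AbsRing R_NormedModule f x). apply H. exact Hx.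
Qed.

Lemma diff_of_partials (f : R -> R -> R) x y :
  locally_2d (fun u v => ex_derive (fun t => f t v) u /\ ex_derive (fun t => f u t) v) x y ->
  continuity_2d_pt (d1 f) x y -> continuity_2d_pt (d2 f) x y ->
  differentiable_pt_lim f x y (d1 f x y) (d2 f x y).
Proof.
  intros [d0 Hd] Hc1 Hc2 eps.
  assert (He2 : 0 < eps / 2) by (apply Rdiv_lt_0_compat; [apply cond_pos|lra]).
  destruct (Hc1 (mkposreal _ He2)) as [da Ha].
  destruct (Hc2 (mkposreal _ He2)) as [db Hb]. simpl in Ha, Hb.
  assert (Hm : 0 < Rmin d0 (Rmin da db)) by
    (repeat apply Rmin_pos; apply cond_pos).
  exists (mkposreal _ Hm). simpl. intros u v Hu Hv.
  assert (Hr1 : Rmin d0 (Rmin da db) <= d0) by apply Rmin_l.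
  assert (Hr2 : Rmin d0 (Rmin da db) <= da) by (eapply Rle_trans; [apply Rmin_r|apply Rmin_l]).
  assert (Hr3 : Rmin d0 (Rmin da db) <= db) by (eapply Rle_trans; [apply Rmin_r|apply Rmin_r]).
  destruct (mvt1 (fun t => f t v) x u) as [c [Hc Ec]].
  { intros t Ht. apply (Hd t v); [|lra]. eapply Rmin_Rmax_between; eauto.
    rewrite Rminus_eq_0, Rabs_R0. apply cond_pos. lra. }
  destruct (mvt1 (fun t => f x t) y v) as [c' [Hc' Ec']].
  { intros t Ht. apply (Hd x t). rewrite Rminus_eq_0, Rabs_R0. apply cond_pos.
    eapply Rmin_Rmax_between; eauto. rewrite Rminus_eq_0, Rabs_R0. apply cond_pos. lra. }
  apply Rmin_Rmax_between' in Hc. apply Rmin_Rmax_between' in Hc'.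
  assert (A1 : Rabs (d1 f c v - d1 f x y) < eps/2) by (apply Ha; lra).
  assert (A2 : Rabs (d2 f x c' - d2 f x y) < eps/2).
  { apply Hb. rewrite Rminus_eq_0, Rabs_R0. apply cond_pos. lra. }
  replace (f u v - f x y - (d1 f x y * (u - x) + d2 f x y * (v - y))) with
    ((d1 f c v - d1 f x y) * (u - x) + (d2 f x c' - d2 f x y) * (v - y)).
  2:{ unfold d1, d2. simpl in Ec, Ec'. lra. }
  eapply Rle_trans; [apply Rabs_triang|]. rewrite !Rabs_mult.
  assert (M1 := Rmax_l (Rabs (u - x)) (Rabs (v - y))).
  assert (M2 := Rmax_r (Rabs (u - x)) (Rabs (v - y))).
  assert (P1 := Rabs_pos (u - x)). assert (P2 := Rabs_pos (v - y)).
  assert (P3 := Rabs_pos (d1 f c v - d1 f x y)). assert (P4 := Rabs_pos (d2 f x c' - d2 f x y)).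
  nra.
Qed.


Lemma box_incr (g : R -> R -> R) u0 v0 r :
  (forall u v, Rabs (u - u0) < r -> Rabs (v - v0) < r ->
     ex_derive (fun t => g t v) u /\ ex_derive (fun t => g u t) v) ->
  forall u v u' v', Rabs (u - u0) < r -> Rabs (v - v0) < r ->
   Rabs (u' - u0) < r -> Rabs (v' - v0) < r ->
  exists xi eta, Rabs (xi - u0) < r /\ Rabs (eta - v0) < r /\
    g u v - g u' v' = d1 g xi v * (u - u') + d2 g u' eta * (v - v').
Proof.
  intros Hd u v u' v' Hu Hv Hu' Hv'.
  destruct (mvt1 (fun t => g t v) u' u) as [c [Hc Ec]].
  { intros t Ht. apply Hd; [|exact Hv]. eapply Rmin_Rmax_between; eauto. }
  destruct (mvt1 (fun t => g u' t) v' v) as [c' [Hc' Ec']].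
  { intros t Ht. apply Hd; [exact Hu'|]. eapply Rmin_Rmax_between; eauto. }
  exists c, c'. split; [eapply Rmin_Rmax_between; eauto|].
  split; [eapply Rmin_Rmax_between; eauto|].
  unfold d1, d2. simpl in Ec, Ec'. lra.
Qed.

Lemma abs_lin2 k1 k2 e1 e2 m :
  Rabs e1 <= m -> Rabs e2 <= m -> Rabs (k1 * e1 + k2 * e2) <= (Rabs k1 + Rabs k2) * m.
Proof.
  intros H1 H2. eapply Rle_trans; [apply Rabs_triang|]. rewrite !Rabs_mult.
  assert (P1 := Rabs_pos k1). assert (P2 := Rabs_pos k2). nra.
Qed.

Lemma abs_inv_bound a0 b0 c0 d0 w1 w2 :
  a0 * d0 - b0 * c0 <> 0 ->
  Rabs ((d0 * w1 - b0 * w2) / (a0 * d0 - b0 * c0)) +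
  Rabs ((a0 * w2 - c0 * w1) / (a0 * d0 - b0 * c0)) <=
  (Rabs a0 + Rabs b0 + Rabs c0 + Rabs d0) / Rabs (a0 * d0 - b0 * c0) * (Rabs w1 + Rabs w2).
Proof.
  intros HJ. set (J := a0 * d0 - b0 * c0) in *.
  assert (HJp : 0 < Rabs J) by (apply Rabs_pos_lt; exact HJ).
  rewrite !Rabs_div by exact HJ.
  unfold Rdiv. rewrite <- Rmult_plus_distr_r.
  rewrite (Rmult_comm (_ + _ + _ + _)), Rmult_assoc. rewrite (Rmult_comm (/ Rabs J)).
  apply Rmult_le_compat_r. left; apply Rinv_0_lt_compat; exact HJp.
  unfold Rminus. eapply Rle_trans.
  apply Rplus_le_compat; apply Rabs_triang.
  rewrite !Rabs_Ropp, !Rabs_mult.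
  assert (P1 := Rabs_pos a0). assert (P2 := Rabs_pos b0). assert (P3 := Rabs_pos c0).
  assert (P4 := Rabs_pos d0). assert (P5 := Rabs_pos w1). assert (P6 := Rabs_pos w2).
  nra.
Qed.

Lemma contraction (X Z : R -> R -> R) u0 v0 r a0 b0 c0 d0 eta :
  (forall u v, Rabs (u - u0) < r -> Rabs (v - v0) < r ->
     ex_derive (fun t => X t v) u /\ ex_derive (fun t => X u t) v /\
     ex_derive (fun t => Z t v) u /\ ex_derive (fun t => Z u t) v /\
     Rabs (d1 X u v - a0) <= eta /\ Rabs (d2 X u v - b0) <= eta /\
     Rabs (d1 Z u v - c0) <= eta /\ Rabs (d2 Z u v - d0) <= eta) ->
  a0 * d0 - b0 * c0 <> 0 ->
  (Rabs a0 + Rabs b0 + Rabs c0 + Rabs d0) * eta <= Rabs (a0 * d0 - b0 * c0) / 4 ->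
  forall u v u' v', Rabs (u - u0) < r -> Rabs (v - v0) < r ->
   Rabs (u' - u0) < r -> Rabs (v' - v0) < r ->
  Rabs ((u - u') - (d0 * (X u v - X u' v') - b0 * (Z u v - Z u' v')) / (a0 * d0 - b0 * c0)) +
  Rabs ((v - v') - (a0 * (Z u v - Z u' v') - c0 * (X u v - X u' v')) / (a0 * d0 - b0 * c0))
  <= (Rabs (u - u') + Rabs (v - v')) / 2.
Proof.
  intros Hd HJ Heta u v u' v' Hu Hv Hu' Hv'.
  destruct (box_incr X u0 v0 r) with (u:=u) (v:=v) (u':=u') (v':=v') as [x1 [y1 [Hx1 [Hy1 EX]]]]; auto.
  { intros p q Hp Hq. destruct (Hd p q Hp Hq) as [A [B _]]. auto. }
  destruct (box_incr Z u0 v0 r) with (u:=u) (v:=v) (u':=u') (v':=v') as [x2 [y2 [Hx2 [Hy2 EZ]]]]; auto.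
  { intros p q Hp Hq. destruct (Hd p q Hp Hq) as [_ [_ [A [B _]]]]. auto. }
  destruct (Hd x1 v Hx1 Hv) as [_ [_ [_ [_ [B1 _]]]]].
  destruct (Hd u' y1 Hu' Hy1) as [_ [_ [_ [_ [_ [B2 _]]]]]].
  destruct (Hd x2 v Hx2 Hv) as [_ [_ [_ [_ [_ [_ [B3 _]]]]]]].
  destruct (Hd u' y2 Hu' Hy2) as [_ [_ [_ [_ [_ [_ [_ B4]]]]]]].
  rewrite EX, EZ. clear EX EZ.
  set (al := d1 X x1 v) in *. set (be := d2 X u' y1) in *.
  set (ga := d1 Z x2 v) in *. set (de := d2 Z u' y2) in *.
  set (J := a0 * d0 - b0 * c0) in *.
  set (du := u - u') in *. set (dv := v - v').
  assert (HJp : 0 < Rabs J) by (apply Rabs_pos_lt; exact HJ).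
  assert (E1 : du - (d0 * (al * du + be * dv) - b0 * (ga * du + de * dv)) / J =
     ((- d0 * (al - a0) + b0 * (ga - c0)) * du + (- d0 * (be - b0) + b0 * (de - d0)) * dv) / J).
  { unfold J. field. exact HJ. }
  assert (E2 : dv - (a0 * (ga * du + de * dv) - c0 * (al * du + be * dv)) / J =
     ((- a0 * (ga - c0) + c0 * (al - a0)) * du + (- a0 * (de - d0) + c0 * (be - b0)) * dv) / J).
  { unfold J. field. exact HJ. }
  rewrite E1, E2. rewrite !Rabs_div by exact HJ.
  assert (K1 := abs_lin2 (-d0) b0 (al - a0) (ga - c0) eta B1 B3).
  assert (K2 := abs_lin2 (-d0) b0 (be - b0) (de - d0) eta B2 B4).
  assert (K3 := abs_lin2 (-a0) c0 (ga - c0) (al - a0) eta B3 B1).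
  assert (K4 := abs_lin2 (-a0) c0 (de - d0) (be - b0) eta B4 B2).
  rewrite Rabs_Ropp in K1, K2, K3, K4.
  set (k1 := - d0 * (al - a0) + b0 * (ga - c0)) in *.
  set (k2 := - d0 * (be - b0) + b0 * (de - d0)) in *.
  set (k3 := - a0 * (ga - c0) + c0 * (al - a0)) in *.
  set (k4 := - a0 * (de - d0) + c0 * (be - b0)) in *.
  assert (Heta0 : 0 <= eta) by (eapply Rle_trans; [apply Rabs_pos|exact B1]).
  assert (P1 := Rabs_pos a0). assert (P2 := Rabs_pos b0). assert (P3 := Rabs_pos c0).
  assert (P4 := Rabs_pos d0).
  assert (L1 : Rabs k1 <= Rabs J / 4) by nra.
  assert (L2 : Rabs k2 <= Rabs J / 4) by nra.
  assert (L3 : Rabs k3 <= Rabs J / 4) by nra.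
  assert (L4 : Rabs k4 <= Rabs J / 4) by nra.
  clear K1 K2 K3 K4.
  assert (Q1 : Rabs (k1 * du + k2 * dv) <= Rabs J / 4 * (Rabs du + Rabs dv)).
  { eapply Rle_trans; [apply Rabs_triang|]. rewrite !Rabs_mult.
    assert (P5 := Rabs_pos du). assert (P6 := Rabs_pos dv).
    assert (P7 := Rabs_pos k1). assert (P8 := Rabs_pos k2). nra. }
  assert (Q2 : Rabs (k3 * du + k4 * dv) <= Rabs J / 4 * (Rabs du + Rabs dv)).
  { eapply Rle_trans; [apply Rabs_triang|]. rewrite !Rabs_mult.
    assert (P5 := Rabs_pos du). assert (P6 := Rabs_pos dv).
    assert (P7 := Rabs_pos k3). assert (P8 := Rabs_pos k4). nra. }
  unfold Rdiv at 1 2. rewrite <- Rmult_plus_distr_r.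
  apply (Rmult_le_reg_r (Rabs J)); [exact HJp|].
  rewrite Rmult_assoc, Rinv_l by lra. lra.
Qed.


Lemma geo0 C x : 0 <= C -> (forall n, x <= C * (1/2)^n) -> x <= 0.
Proof.
  intros HC H. destruct (Rle_or_lt x 0) as [h|h]; [exact h|].
  assert (Hy : 0 < x / (C + 1)) by (apply Rdiv_lt_0_compat; lra).
  assert (Hh : Rabs (1/2) < 1) by (rewrite Rabs_right; lra).
  destruct (pow_lt_1_zero (1/2) Hh _ Hy) as [N HN].
  specialize (HN N (le_n N)). specialize (H N).
  assert (Hp : 0 < (1/2)^N) by (apply pow_lt; lra).
  rewrite Rabs_right in HN by lra.
  apply (Rmult_lt_compat_l (C+1)) in HN; [|lra].
  replace ((C + 1) * (x / (C + 1))) with x in HN by (field; lra). nra.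
Qed.

Fixpoint iter2 (T1 T2 : R -> R -> R) (u0 v0 : R) (n : nat) : R * R :=
  match n with
  | O => (u0, v0)
  | S n' => let p := iter2 T1 T2 u0 v0 n' in (T1 (fst p) (snd p), T2 (fst p) (snd p))
  end.

Definition dist2 (p q : R * R) := Rabs (fst p - fst q) + Rabs (snd p - snd q).

Lemma dist2_tri p q s : dist2 p s <= dist2 p q + dist2 q s.
Proof.
  unfold dist2.
  assert (H1 := Rabs_triang (fst p - fst q) (fst q - fst s)).
  assert (H2 := Rabs_triang (snd p - snd q) (snd q - snd s)).
  replace (fst p - fst q + (fst q - fst s)) with (fst p - fst s) in H1 by ring.
  replace (snd p - snd q + (snd q - snd s)) with (snd p - snd s) in H2 by ring. lra.
Qed.

Lemma dist2_sym p q : dist2 p q = dist2 q p.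
Proof. unfold dist2. rewrite (Rabs_minus_sym (fst p)), (Rabs_minus_sym (snd p)). ring. Qed.

Lemma dist2_pos p q : 0 <= dist2 p q.
Proof. unfold dist2. assert (H1 := Rabs_pos (fst p - fst q)). assert (H2 := Rabs_pos (snd p - snd q)). lra. Qed.

Lemma fixed_point (T1 T2 : R -> R -> R) u0 v0 r :
  0 < r ->
  (forall u v u' v', Rabs (u - u0) + Rabs (v - v0) < r -> Rabs (u' - u0) + Rabs (v' - v0) < r ->
     Rabs (T1 u v - T1 u' v') + Rabs (T2 u v - T2 u' v') <= (Rabs (u - u') + Rabs (v - v')) / 2) ->
  Rabs (T1 u0 v0 - u0) + Rabs (T2 u0 v0 - v0) <= r / 4 ->
  exists l1 l2, Rabs (l1 - u0) + Rabs (l2 - v0) <= r / 2 /\ T1 l1 l2 = l1 /\ T2 l1 l2 = l2.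
Proof.
  intros Hr Hc H0.
  set (T := fun p : R * R => (T1 (fst p) (snd p), T2 (fst p) (snd p))).
  set (p0 := (u0, v0)).
  assert (Hc' : forall p q, dist2 p p0 < r -> dist2 q p0 < r -> dist2 (T p) (T q) <= dist2 p q / 2).
  { intros [u v] [u' v'] Hp Hq. unfold dist2 in *; simpl in *. apply Hc; auto. }
  set (s := iter2 T1 T2 u0 v0).
  assert (Es : forall n, s (S n) = T (s n)) by reflexivity.
  assert (E0 : s O = p0) by reflexivity.
  assert (HT0 : dist2 (T p0) p0 <= r / 4) by (unfold dist2; simpl; exact H0).
  assert (C1 : forall n, dist2 (s n) p0 <= r / 2).
  { induction n. rewrite E0. unfold dist2; simpl. rewrite !Rminus_eq_0, Rabs_R0. lra.
    rewrite Es. eapply Rle_trans; [apply (dist2_tri _ (T p0))|].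
    assert (dist2 (T (s n)) (T p0) <= dist2 (s n) p0 / 2).
    { apply Hc'. lra. unfold dist2; simpl; rewrite !Rminus_eq_0, Rabs_R0; lra. }
    lra. }
  assert (C2 : forall n, dist2 (s (S n)) (s n) <= r / 4 * (1/2)^n).
  { induction n. simpl pow. rewrite Es, E0. lra.
    rewrite (Es (S n)), (Es n). eapply Rle_trans. apply Hc'.
    assert (h := C1 (S n)). rewrite Es in h. lra. assert (h := C1 n). lra.
    rewrite <- Es. simpl pow. lra. }
  assert (C3 : forall n k, dist2 (s (n + k)%nat) (s n) <= r / 2 * (1/2)^n * (1 - (1/2)^k)).
  { intros n k. induction k.
    - rewrite Nat.add_0_r. unfold dist2. rewrite !Rminus_eq_0, Rabs_R0. simpl. lra.
    - replace (n + S k)%nat with (S (n + k)) by lia.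
      eapply Rle_trans; [apply (dist2_tri _ (s (n+k)%nat))|].
      assert (h := C2 (n + k)%nat). rewrite pow_add in h. simpl pow.
      assert (0 <= (1/2)^n) by (apply pow_le; lra).
      assert (0 <= (1/2)^k) by (apply pow_le; lra). nra. }
  assert (C3' : forall n m, (n <= m)%nat -> dist2 (s m) (s n) <= r / 2 * (1/2)^n).
  { intros n m Hnm. replace m with (n + (m - n))%nat by lia.
    eapply Rle_trans; [apply C3|].
    assert (0 <= (1/2)^n) by (apply pow_le; lra).
    assert (0 <= (1/2)^(m-n)) by (apply pow_le; lra).
    assert (0 <= r / 2 * (1/2)^n * (1/2)^(m-n)) by (apply Rmult_le_pos; [apply Rmult_le_pos|]; lra). nra. }
  assert (Cau : forall n m, dist2 (s m) (s n) <= r / 2 * (1/2)^(Nat.min n m)).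
  { intros n m. destruct (Nat.le_ge_cases n m) as [h|h].
    - rewrite Nat.min_l by exact h. apply C3'. exact h.
    - rewrite Nat.min_r by exact h. rewrite dist2_sym. apply C3'. exact h. }
  assert (Hsm : forall eps, eps > 0 -> exists N, forall n m, (n >= N)%nat -> (m >= N)%nat ->
      dist2 (s m) (s n) < eps).
  { intros eps He. assert (Hy : 0 < eps / (r/2 + 1)) by (apply Rdiv_lt_0_compat; lra).
    assert (Hh : Rabs (1/2) < 1) by (rewrite Rabs_right; lra).
    destruct (pow_lt_1_zero (1/2) Hh _ Hy) as [N HN].
    exists N. intros n m Hn Hm. eapply Rle_lt_trans; [apply Cau|].
    specialize (HN (Nat.min n m) ltac:(lia)).
    assert (0 <= (1/2)^(Nat.min n m)) by (apply pow_le; lra).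
    rewrite Rabs_right in HN by lra.
    apply (Rmult_lt_compat_l (r/2+1)) in HN; [|lra].
    replace ((r/2 + 1) * (eps / (r/2 + 1))) with eps in HN by (field; lra). nra. }
  assert (Cf : Cauchy_crit (fun n => fst (s n))).
  { intros eps He. destruct (Hsm eps He) as [N HN]. exists N. intros n m Hn Hm.
    unfold Rdist. specialize (HN m n Hm Hn). unfold dist2 in HN.
    assert (h := Rabs_pos (snd (s n) - snd (s m))). lra. }
  assert (Cs : Cauchy_crit (fun n => snd (s n))).
  { intros eps He. destruct (Hsm eps He) as [N HN]. exists N. intros n m Hn Hm.
    unfold Rdist. specialize (HN m n Hm Hn). unfold dist2 in HN.
    assert (h := Rabs_pos (fst (s n) - fst (s m))). lra. }
  destruct (Rcomplete.R_complete _ Cf) as [l1 Hl1]. destruct (Rcomplete.R_complete _ Cs) as [l2 Hl2].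
  set (l := (l1, l2)).
  assert (C4 : forall n, dist2 l (s n) <= r / 2 * (1/2)^n).
  { intros n. apply le_epsilon. intros eps He.
    destruct (Hl1 (eps/2)) as [N1 HN1]; [lra|]. destruct (Hl2 (eps/2)) as [N2 HN2]; [lra|].
    set (m := Nat.max n (Nat.max N1 N2)).
    specialize (HN1 m ltac:(lia)). specialize (HN2 m ltac:(lia)).
    unfold Rdist in HN1, HN2.
    assert (h := C3' n m ltac:(lia)).
    eapply Rle_trans; [apply (dist2_tri _ (s m))|].
    unfold dist2 at 1. simpl fst; simpl snd.
    rewrite (Rabs_minus_sym l1), (Rabs_minus_sym l2). lra. }
  assert (Hp0 : forall n, 0 <= (1/2)^n) by (intros; apply pow_le; lra).
  assert (C5 : dist2 l p0 <= r / 2).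
  { assert (dist2 l p0 - r/2 <= 0); [|lra]. apply (geo0 (r/2)); [lra|].
    intros n. assert (h1 := dist2_tri l (s n) p0). assert (h2 := C4 n). assert (h3 := C1 n). lra. }
  assert (C6 : dist2 (T l) l <= 0).
  { apply (geo0 (r/2)); [lra|]. intros n.
    eapply Rle_trans; [apply (dist2_tri _ (T (s n)))|].
    assert (h1 : dist2 (T l) (T (s n)) <= dist2 l (s n) / 2).
    { apply Hc'. lra. assert (h := C1 n). lra. }
    assert (h2 := C4 (S n)). rewrite Es in h2. rewrite dist2_sym in h2.
    assert (h3 := C4 n). simpl pow in h2. lra. }
  exists l1, l2. unfold dist2 in C5, C6. simpl in C5, C6.
  assert (a1 := Rabs_pos (T1 l1 l2 - l1)). assert (a2 := Rabs_pos (T2 l1 l2 - l2)).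
  split; [exact C5|]. split.
  - assert (Rabs (T1 l1 l2 - l1) = 0) by lra.
    apply Rminus_diag_uniq. apply (Rabs_eq_0 _ H).
  - assert (Rabs (T2 l1 l2 - l2) = 0) by lra.
    apply Rminus_diag_uniq. apply (Rabs_eq_0 _ H).
Qed.


Lemma ift (X Z : R -> R -> R) (U : R -> R -> Prop) u0 v0 :
  open2 U -> Ck 1 U X -> Ck 1 U Z -> U u0 v0 ->
  d1 X u0 v0 * d2 Z u0 v0 - d2 X u0 v0 * d1 Z u0 v0 <> 0 ->
  exists r dl K (G1 G2 : R -> R -> R), 0 < r /\ 0 < dl /\ 0 <= K /\
   (forall u v, Rabs (u - u0) < r -> Rabs (v - v0) < r -> U u v /\
      d1 X u v * d2 Z u v - d2 X u v * d1 Z u v <> 0) /\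
   (forall x z, Rabs (x - X u0 v0) < dl -> Rabs (z - Z u0 v0) < dl ->
      Rabs (G1 x z - u0) + Rabs (G2 x z - v0) < r /\
      X (G1 x z) (G2 x z) = x /\ Z (G1 x z) (G2 x z) = z) /\
   (forall u v u' v', Rabs (u - u0) < r -> Rabs (v - v0) < r ->
      Rabs (u' - u0) < r -> Rabs (v' - v0) < r ->
      Rabs (u - u') + Rabs (v - v') <= K * (Rabs (X u v - X u' v') + Rabs (Z u v - Z u' v'))).
Proof.
  intros HU HX HZ H0 HJ.
  set (a0 := d1 X u0 v0) in *. set (b0 := d2 X u0 v0) in *.
  set (c0 := d1 Z u0 v0) in *. set (d0 := d2 Z u0 v0) in *.
  set (J0 := a0 * d0 - b0 * c0) in *.
  set (S := Rabs a0 + Rabs b0 + Rabs c0 + Rabs d0).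
  assert (HJp : 0 < Rabs J0) by (apply Rabs_pos_lt; exact HJ).
  assert (HS : 0 <= S) by (unfold S; assert (h1 := Rabs_pos a0); assert (h2 := Rabs_pos b0);
    assert (h3 := Rabs_pos c0); assert (h4 := Rabs_pos d0); lra).
  set (eta := Rabs J0 / (4 * (S + 1))).
  assert (Heta : 0 < eta) by (apply Rdiv_lt_0_compat; lra).
  assert (HSeta : S * eta <= Rabs J0 / 4).
  { unfold eta. apply (Rmult_le_reg_r (4 * (S + 1))); [lra|].
    field_simplify; [|lra]. nra. }
  destruct (C1_of U X HX u0 v0 H0) as [_ _ _ CX1 CX2].
  destruct (C1_of U Z HZ u0 v0 H0) as [_ _ _ CZ1 CZ2].
  assert (HJc : continuity_2d_pt (fun u v => d1 X u v * d2 Z u v - d2 X u v * d1 Z u v) u0 v0).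
  { apply continuity_2d_pt_minus; apply continuity_2d_pt_mult; auto. }
  assert (HJl := continuity_2d_pt_neq_0 _ _ _ HJc HJ).
  assert (L := locally_2d_and _ _ _ _ (locally_2d_and _ _ _ _ (open2_loc U u0 v0 HU H0) HJl)
     (locally_2d_and _ _ _ _ (CX1 (mkposreal _ Heta))
     (locally_2d_and _ _ _ _ (CX2 (mkposreal _ Heta))
     (locally_2d_and _ _ _ _ (CZ1 (mkposreal _ Heta)) (CZ2 (mkposreal _ Heta)))))).
  destruct L as [[r Hr] Hbox]. simpl in Hbox.
  assert (Hd : forall u v, Rabs (u - u0) < r -> Rabs (v - v0) < r ->
     ex_derive (fun t => X t v) u /\ ex_derive (fun t => X u t) v /\
     ex_derive (fun t => Z t v) u /\ ex_derive (fun t => Z u t) v /\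
     Rabs (d1 X u v - a0) <= eta /\ Rabs (d2 X u v - b0) <= eta /\
     Rabs (d1 Z u v - c0) <= eta /\ Rabs (d2 Z u v - d0) <= eta).
  { intros u v Hu Hv. destruct (Hbox u v Hu Hv) as [[HUuv _] [B1 [B2 [B3 B4]]]].
    destruct (C1_of U X HX u v HUuv) as [_ E1 E2 _ _].
    destruct (C1_of U Z HZ u v HUuv) as [_ E3 E4 _ _].
    repeat split; auto; unfold a0, b0, c0, d0; lra. }
  assert (Hcon := contraction X Z u0 v0 r a0 b0 c0 d0 eta Hd HJ ltac:(fold J0; fold S; lra)).
  fold J0 in Hcon.
  set (K := 2 * S / Rabs J0).
  set (dl := r * Rabs J0 / (8 * (S + 1))).
  assert (Hdl : 0 < dl) by (apply Rdiv_lt_0_compat; [apply Rmult_lt_0_compat|]; lra).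
  assert (Hsb : forall u v, Rabs (u - u0) + Rabs (v - v0) < r -> Rabs (u - u0) < r /\ Rabs (v - v0) < r).
  { intros u v h. assert (h1 := Rabs_pos (u - u0)). assert (h2 := Rabs_pos (v - v0)). lra. }
  assert (Hex : forall x z, exists p : R * R,
     Rabs (x - X u0 v0) < dl -> Rabs (z - Z u0 v0) < dl ->
     Rabs (fst p - u0) + Rabs (snd p - v0) < r /\ X (fst p) (snd p) = x /\ Z (fst p) (snd p) = z).
  { intros x z. destruct (classic (Rabs (x - X u0 v0) < dl /\ Rabs (z - Z u0 v0) < dl))
      as [[Hx Hz]|Hn]; [|exists (u0, v0); intros; tauto].
    set (T1 := fun u v => u - (d0 * (X u v - x) - b0 * (Z u v - z)) / J0).
    set (T2 := fun u v => v - (a0 * (Z u v - z) - c0 * (X u v - x)) / J0).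
    destruct (fixed_point T1 T2 u0 v0 r) as [l1 [l2 [Hl [E1 E2]]]].
    - exact Hr.
    - intros u v u' v' Hp Hq. destruct (Hsb _ _ Hp). destruct (Hsb _ _ Hq).
      specialize (Hcon u v u' v'). unfold T1, T2.
      replace (u - (d0 * (X u v - x) - b0 * (Z u v - z)) / J0 -
        (u' - (d0 * (X u' v' - x) - b0 * (Z u' v' - z)) / J0)) with
        ((u - u') - (d0 * (X u v - X u' v') - b0 * (Z u v - Z u' v')) / J0) by (field; exact HJ).
      replace (v - (a0 * (Z u v - z) - c0 * (X u v - x)) / J0 -
        (v' - (a0 * (Z u' v' - z) - c0 * (X u' v' - x)) / J0)) with
        ((v - v') - (a0 * (Z u v - Z u' v') - c0 * (X u v - X u' v')) / J0) by (field; exact HJ).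
      apply Hcon; auto.
    - unfold T1, T2.
      replace (u0 - (d0 * (X u0 v0 - x) - b0 * (Z u0 v0 - z)) / J0 - u0) with
        ((d0 * (x - X u0 v0) - b0 * (z - Z u0 v0)) / J0) by (field; exact HJ).
      replace (v0 - (a0 * (Z u0 v0 - z) - c0 * (X u0 v0 - x)) / J0 - v0) with
        ((a0 * (z - Z u0 v0) - c0 * (x - X u0 v0)) / J0) by (field; exact HJ).
      eapply Rle_trans; [apply abs_inv_bound; exact HJ|]. fold J0 S.
      assert (h : Rabs (x - X u0 v0) + Rabs (z - Z u0 v0) <= 2 * dl) by lra.
      apply Rle_trans with (S / Rabs J0 * (2 * dl)).
      { apply Rmult_le_compat_l; [apply Rdiv_le_0_compat; lra| exact h]. }
      unfold dl. apply (Rmult_le_reg_r (Rabs J0 * (S + 1))). nra.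
      field_simplify; try lra. nra.
    - exists (l1, l2). intros _ _. simpl.
      split; [lra|].
      unfold T1, T2 in E1, E2.
      assert (F1 : (d0 * (X l1 l2 - x) - b0 * (Z l1 l2 - z)) / J0 = 0) by lra.
      assert (F2 : (a0 * (Z l1 l2 - z) - c0 * (X l1 l2 - x)) / J0 = 0) by lra.
      unfold Rdiv in F1, F2.
      apply Rmult_integral in F1. apply Rmult_integral in F2.
      assert (HJi : / J0 <> 0) by (apply Rinv_neq_0_compat; exact HJ).
      destruct F1 as [F1|F1]; [|contradiction]. destruct F2 as [F2|F2]; [|contradiction].
      assert (G1 : J0 * (X l1 l2 - x) = 0) by (unfold J0; replace ((a0 * d0 - b0 * c0) * (X l1 l2 - x)) with (a0 * (d0 * (X l1 l2 - x) - b0 * (Z l1 l2 - z)) + b0 * (a0 * (Z l1 l2 - z) - c0 * (X l1 l2 - x))) by ring; rewrite F1, F2; ring).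
      assert (G2 : J0 * (Z l1 l2 - z) = 0) by (unfold J0; replace ((a0 * d0 - b0 * c0) * (Z l1 l2 - z)) with (c0 * (d0 * (X l1 l2 - x) - b0 * (Z l1 l2 - z)) + d0 * (a0 * (Z l1 l2 - z) - c0 * (X l1 l2 - x))) by ring; rewrite F1, F2; ring).
      apply Rmult_integral in G1. apply Rmult_integral in G2.
      destruct G1; [contradiction|]. destruct G2; [contradiction|]. split; lra. }
  set (g := fun x z => proj1_sig (constructive_indefinite_description _ (Hex x z))).
  assert (Hg : forall x z, Rabs (x - X u0 v0) < dl -> Rabs (z - Z u0 v0) < dl ->
     Rabs (fst (g x z) - u0) + Rabs (snd (g x z) - v0) < r /\
     X (fst (g x z)) (snd (g x z)) = x /\ Z (fst (g x z)) (snd (g x z)) = z).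
  { intros x z. unfold g. destruct (constructive_indefinite_description _ (Hex x z)). simpl. auto. }
  exists r, dl, K, (fun x z => fst (g x z)), (fun x z => snd (g x z)).
  split; [exact Hr|]. split; [exact Hdl|]. split.
  { unfold K. apply Rdiv_le_0_compat; lra. }
  split. { intros u v Hu Hv. apply (Hbox u v Hu Hv). }
  split. { exact Hg. }
  intros u v u' v' Hu Hv Hu' Hv'.
  specialize (Hcon u v u' v' Hu Hv Hu' Hv').
  assert (Hinv := abs_inv_bound a0 b0 c0 d0 (X u v - X u' v') (Z u v - Z u' v') HJ).
  fold J0 S in Hinv.
  set (A1 := (d0 * (X u v - X u' v') - b0 * (Z u v - Z u' v')) / J0) in *.
  set (A2 := (a0 * (Z u v - Z u' v') - c0 * (X u v - X u' v')) / J0) in *.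
  assert (T1 := Rabs_triang (u - u' - A1) A1).
  assert (T2 := Rabs_triang (v - v' - A2) A2).
  replace (u - u' - A1 + A1) with (u - u') in T1 by ring.
  replace (v - v' - A2 + A2) with (v - v') in T2 by ring.
  unfold K. replace (2 * S / Rabs J0) with (2 * (S / Rabs J0)) by (field; lra).
  lra.
Qed.


Lemma locally_R (P : R -> Prop) t0 :
  locally t0 P -> exists d, 0 < d /\ forall t, Rabs (t - t0) < d -> P t.
Proof.
  intros [e He]. exists e. split; [apply cond_pos|]. intros t Ht. apply He. exact Ht.
Qed.

Lemma R_locally (P : R -> Prop) t0 d :
  0 < d -> (forall t, Rabs (t - t0) < d -> P t) -> locally t0 P.
Proof.
  intros Hd H. exists (mkposreal d Hd). intros t Ht. apply H. exact Ht.
Qed.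

Lemma chain (h : R -> R -> R) (g1 g2 : R -> R) t0 hu hv l1 l2 :
  differentiable_pt_lim h (g1 t0) (g2 t0) hu hv ->
  is_derive g1 t0 l1 -> is_derive g2 t0 l2 ->
  is_derive (fun t => h (g1 t) (g2 t)) t0 (hu * l1 + hv * l2).
Proof.
  intros Hh H1 H2. apply is_derive_Reals. apply derivable_pt_lim_comp_2d; auto;
  apply is_derive_Reals; auto.
Qed.

Lemma solve_bound a b c d w1 w2 D1 D2 h B :
  a * d - b * c <> 0 -> h <> 0 ->
  Rabs (w1 * h - (a * D1 + b * D2)) <= B * Rabs h ->
  Rabs (w2 * h - (c * D1 + d * D2)) <= B * Rabs h ->
  Rabs (D1 / h - (d * w1 - b * w2) / (a * d - b * c)) <=
     (Rabs a + Rabs b + Rabs c + Rabs d) * B / Rabs (a * d - b * c) /\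
  Rabs (D2 / h - (a * w2 - c * w1) / (a * d - b * c)) <=
     (Rabs a + Rabs b + Rabs c + Rabs d) * B / Rabs (a * d - b * c).
Proof.
  intros HJ Hh E1 E2.
  set (e1 := w1 * h - (a * D1 + b * D2)) in *.
  set (e2 := w2 * h - (c * D1 + d * D2)) in *.
  assert (Hhp : 0 < Rabs h) by (apply Rabs_pos_lt; exact Hh).
  assert (HJp : 0 < Rabs (a * d - b * c)) by (apply Rabs_pos_lt; exact HJ).
  assert (P1 := Rabs_pos a). assert (P2 := Rabs_pos b). assert (P3 := Rabs_pos c).
  assert (P4 := Rabs_pos d).
  assert (HB : 0 <= B).
  { assert (h0 := Rabs_pos e1). apply (Rmult_le_reg_r (Rabs h)); lra. }
  split.
  - replace (D1 / h - (d * w1 - b * w2) / (a * d - b * c)) with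
      (((- d) * e1 + b * e2) / ((a * d - b * c) * h)) by (unfold e1, e2; field; auto).
    rewrite Rabs_div by (apply Rmult_integral_contrapositive; auto).
    rewrite Rabs_mult. apply (Rmult_le_reg_r (Rabs (a * d - b * c) * Rabs h)).
    nra. unfold Rdiv. rewrite Rmult_assoc, Rinv_l by nra. rewrite Rmult_1_r.
    replace ((Rabs a + Rabs b + Rabs c + Rabs d) * B * / Rabs (a * d - b * c) *
      (Rabs (a * d - b * c) * Rabs h)) with ((Rabs a + Rabs b + Rabs c + Rabs d) * (B * Rabs h)) by (field; lra).
    eapply Rle_trans; [apply abs_lin2; eauto|]. rewrite Rabs_Ropp in *.
    assert (0 <= B * Rabs h) by nra. nra.
  - replace (D2 / h - (a * w2 - c * w1) / (a * d - b * c)) with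
      (((- a) * e2 + c * e1) / ((a * d - b * c) * h)) by (unfold e1, e2; field; auto).
    rewrite Rabs_div by (apply Rmult_integral_contrapositive; auto).
    rewrite Rabs_mult. apply (Rmult_le_reg_r (Rabs (a * d - b * c) * Rabs h)).
    nra. unfold Rdiv. rewrite Rmult_assoc, Rinv_l by nra. rewrite Rmult_1_r.
    replace ((Rabs a + Rabs b + Rabs c + Rabs d) * B * / Rabs (a * d - b * c) *
      (Rabs (a * d - b * c) * Rabs h)) with ((Rabs a + Rabs b + Rabs c + Rabs d) * (B * Rabs h)) by (field; lra).
    eapply Rle_trans; [apply abs_lin2; eauto|]. rewrite Rabs_Ropp in *.
    assert (0 <= B * Rabs h) by nra. nra.
Qed.

Lemma inv_deriv (X Z : R -> R -> R) (g1 g2 : R -> R) t0 a b c d w1 w2 K :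
  differentiable_pt_lim X (g1 t0) (g2 t0) a b ->
  differentiable_pt_lim Z (g1 t0) (g2 t0) c d ->
  a * d - b * c <> 0 -> 0 <= K ->
  locally t0 (fun t => X (g1 t) (g2 t) = X (g1 t0) (g2 t0) + w1 * (t - t0) /\
                       Z (g1 t) (g2 t) = Z (g1 t0) (g2 t0) + w2 * (t - t0) /\
                       Rabs (g1 t - g1 t0) + Rabs (g2 t - g2 t0) <= K * Rabs (t - t0)) ->
  is_derive g1 t0 ((d * w1 - b * w2) / (a * d - b * c)) /\
  is_derive g2 t0 ((a * w2 - c * w1) / (a * d - b * c)).
Proof.
  intros HX HZ HJ HK Hloc.
  set (Jd := a * d - b * c) in *.
  set (M := Rabs a + Rabs b + Rabs c + Rabs d).
  assert (HM : 0 <= M) by (unfold M; assert (P1 := Rabs_pos a); assert (P2 := Rabs_pos b);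
    assert (P3 := Rabs_pos c); assert (P4 := Rabs_pos d); lra).
  assert (HJp : 0 < Rabs Jd) by (apply Rabs_pos_lt; exact HJ).
  destruct (locally_R _ _ Hloc) as [d0 [Hd0 Hl]].
  assert (Main : forall eps, 0 < eps -> exists del, 0 < del /\ forall h, h <> 0 -> Rabs h < del ->
     Rabs ((g1 (t0 + h) - g1 t0) / h - (d * w1 - b * w2) / Jd) < eps /\
     Rabs ((g2 (t0 + h) - g2 t0) / h - (a * w2 - c * w1) / Jd) < eps).
  { intros eps Heps.
    set (e' := eps * Rabs Jd / ((M + 1) * (K + 1))).
    assert (He' : 0 < e') by (unfold e'; apply Rdiv_lt_0_compat; [apply Rmult_lt_0_compat|apply Rmult_lt_0_compat]; lra).
    destruct (HX (mkposreal _ He')) as [dX HdX]. destruct (HZ (mkposreal _ He')) as [dZ HdZ].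
    simpl in HdX, HdZ.
    set (m := Rmin dX dZ).
    assert (Hm : 0 < m) by (unfold m; apply Rmin_pos; apply cond_pos).
    exists (Rmin d0 (m / (K + 1))). split.
    { apply Rmin_pos; [lra|apply Rdiv_lt_0_compat; lra]. }
    intros h Hh Hhd.
    assert (Hh0 : Rabs h < d0) by (eapply Rlt_le_trans; [exact Hhd|apply Rmin_l]).
    assert (Hh1 : Rabs h < m / (K + 1)) by (eapply Rlt_le_trans; [exact Hhd|apply Rmin_r]).
    replace h with (t0 + h - t0) in Hh0 by ring.
    destruct (Hl _ Hh0) as [EX [EZ EB]].
    replace (t0 + h - t0) with h in EX, EZ, EB by ring.
    set (D1 := g1 (t0 + h) - g1 t0) in *. set (D2 := g2 (t0 + h) - g2 t0) in *.
    assert (P1 := Rabs_pos D1). assert (P2 := Rabs_pos D2). assert (Ph := Rabs_pos h).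
    assert (HKm : K * Rabs h < m).
    { apply Rle_lt_trans with ((K + 1) * Rabs h). nra.
      apply (Rmult_lt_compat_l (K + 1)) in Hh1; [|lra].
      replace ((K + 1) * (m / (K + 1))) with m in Hh1 by (field; lra). lra. }
    assert (Hmx : m <= dX) by apply Rmin_l. assert (Hmz : m <= dZ) by apply Rmin_r.
    assert (HmaxB : Rmax (Rabs (g1 (t0 + h) - g1 t0)) (Rabs (g2 (t0 + h) - g2 t0)) <= K * Rabs h).
    { fold D1 D2. apply Rmax_lub; lra. }
    assert (BX := HdX (g1 (t0 + h)) (g2 (t0 + h)) ltac:(fold D1; lra) ltac:(fold D2; lra)).
    assert (BZ := HdZ (g1 (t0 + h)) (g2 (t0 + h)) ltac:(fold D1; lra) ltac:(fold D2; lra)).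
    fold D1 D2 in BX, BZ, HmaxB.
    rewrite EX in BX. rewrite EZ in BZ.
    replace (X (g1 t0) (g2 t0) + w1 * h - X (g1 t0) (g2 t0)) with (w1 * h) in BX by ring.
    replace (Z (g1 t0) (g2 t0) + w2 * h - Z (g1 t0) (g2 t0)) with (w2 * h) in BZ by ring.
    assert (BX' : Rabs (w1 * h - (a * D1 + b * D2)) <= (e' * K) * Rabs h).
    { eapply Rle_trans; [exact BX|]. rewrite Rmult_assoc. apply Rmult_le_compat_l; lra. }
    assert (BZ' : Rabs (w2 * h - (c * D1 + d * D2)) <= (e' * K) * Rabs h).
    { eapply Rle_trans; [exact BZ|]. rewrite Rmult_assoc. apply Rmult_le_compat_l; lra. }
    destruct (solve_bound a b c d w1 w2 D1 D2 h (e' * K) HJ Hh BX' BZ') as [S1 S2].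
    fold Jd M in S1, S2.
    assert (Hfin : M * (e' * K) / Rabs Jd < eps).
    { assert (HP : 0 < (M + 1) * (K + 1)) by (apply Rmult_lt_0_compat; lra).
      replace (M * (e' * K) / Rabs Jd) with (eps * (M * K) * / ((M + 1) * (K + 1)))
        by (unfold e'; field; split; lra).
      apply (Rmult_lt_reg_r ((M + 1) * (K + 1))); [exact HP|].
      rewrite Rmult_assoc, Rinv_l by lra. nra. }
    split; lra. }
  split; apply is_derive_Reals; intros eps Heps; destruct (Main eps Heps) as [del [Hdel Hm]];
    exists (mkposreal del Hdel); intros h Hh Hhd; apply Hm; auto.
Qed.


Definition Lp (X Y Z : R -> R -> R) (x y z : R) u v :=
  lprod x y z (N1 Y Z u v) (N2 X Z u v) (N3 X Y u v).

Lemma H_num (X Y Z : R -> R -> R) u v :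
  timelike_at X Y Z u v -> mean_curv X Y Z u v = 0 ->
  E_ff X Y Z u v * Lp X Y Z (d2 (d2 X) u v) (d2 (d2 Y) u v) (d2 (d2 Z) u v) u v
  - 2 * F_ff X Y Z u v * Lp X Y Z (d2 (d1 X) u v) (d2 (d1 Y) u v) (d2 (d1 Z) u v) u v
  + G_ff X Y Z u v * Lp X Y Z (d1 (d1 X) u v) (d1 (d1 Y) u v) (d1 (d1 Z) u v) u v = 0.
Proof.
  unfold timelike_at, mean_curv, L_sf, M_sf, N_sf, n1, n2, n3, nrm, Lp.
  set (nn := lprod (N1 Y Z u v) (N2 X Z u v) (N3 X Y u v) (N1 Y Z u v) (N2 X Z u v) (N3 X Y u v)).
  assert (Enn : nn = - (E_ff X Y Z u v * G_ff X Y Z u v - F_ff X Y Z u v ^ 2)).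
  { unfold nn, E_ff, F_ff, G_ff, N1, N2, N3, lprod. ring. }
  intros Ht Hm.
  assert (Hnn : 0 < nn) by lra.
  rewrite Rabs_right in Hm by lra.
  assert (Hs : 0 < sqrt nn) by (apply sqrt_lt_R0; exact Hnn).
  set (s := sqrt nn) in *.
  set (E := E_ff X Y Z u v) in *. set (F := F_ff X Y Z u v) in *. set (G := G_ff X Y Z u v) in *.
  unfold lprod in *.
  set (a1 := N1 Y Z u v) in *. set (a2 := N2 X Z u v) in *. set (a3 := N3 X Y u v) in *.
  unfold Rdiv in Hm. apply Rmult_integral in Hm. destruct Hm as [Hm|Hm].
  - replace (E * (d2 (d2 X) u v * a1 + d2 (d2 Y) u v * a2 - d2 (d2 Z) u v * a3) -
      2 * F * (d2 (d1 X) u v * a1 + d2 (d1 Y) u v * a2 - d2 (d1 Z) u v * a3) +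
      G * (d1 (d1 X) u v * a1 + d1 (d1 Y) u v * a2 - d1 (d1 Z) u v * a3)) with
     (s * (E * (d2 (d2 X) u v * (a1 * / s) + d2 (d2 Y) u v * (a2 * / s) - d2 (d2 Z) u v * (a3 * / s)) -
      2 * F * (d2 (d1 X) u v * (a1 * / s) + d2 (d1 Y) u v * (a2 * / s) - d2 (d1 Z) u v * (a3 * / s)) +
      G * (d1 (d1 X) u v * (a1 * / s) + d1 (d1 Y) u v * (a2 * / s) - d1 (d1 Z) u v * (a3 * / s))))
     by (field; lra).
    rewrite Hm. ring.
  - exfalso. revert Hm. apply Rinv_neq_0_compat. lra.
Qed.

Definition ratio_d (A B C D E F G H A' B' C' D' E' F' G' H' : R) :=
  ((A' * B + A * B' - (C' * D + C * D')) * (E * F - G * H)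
   - (A * B - C * D) * (E' * F + E * F' - (G' * H + G * H'))) / (E * F - G * H) ^ 2.

Lemma bi_alg a b c d e f xuu xuv xvu xvv yuu yuv yvu yvv zuu zuv zvu zvv :
  a * d - b * c <> 0 -> xvu = xuv -> yvu = yuv -> zvu = zuv ->
  let J := a * d - b * c in
  let g1x := d / J in let g2x := - c / J in let g1z := - b / J in let g2z := a / J in
  let N1 := e * d - c * f in let N2 := c * b - a * d in let N3 := - (a * f - e * b) in
  let E := a*a+e*e-c*c in let F := a*b+e*f-c*d in let G := b*b+f*f-d*d in
  let L := xuu*N1 + yuu*N2 - zuu*N3 in
  let M := xuv*N1 + yuv*N2 - zuv*N3 in
  let N := xvv*N1 + yvv*N2 - zvv*N3 in
  E * N - 2 * F * M + G * L = 0 ->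
  let P := (e * d - f * c) / J in
  let Q := (f * a - e * b) / J in
  (* derivatives of atoms in direction x and z *)
  let ax := xuu * g1x + xuv * g2x in let az := xuu * g1z + xuv * g2z in
  let bx := xvu * g1x + xvv * g2x in let bz := xvu * g1z + xvv * g2z in
  let cx := zuu * g1x + zuv * g2x in let cz := zuu * g1z + zuv * g2z in
  let dx := zvu * g1x + zvv * g2x in let dz := zvu * g1z + zvv * g2z in
  let ex := yuu * g1x + yuv * g2x in let ez := yuu * g1z + yuv * g2z in
  let fx := yvu * g1x + yvv * g2x in let fz := yvu * g1z + yvv * g2z in
  let Pxx := ratio_d e d f c a d b c ex dx fx cx ax dx bx cx in
  let Pzx := ratio_d f a e b a d b c fx ax ex bx ax dx bx cx in
  let Pzz := ratio_d f a e b a d b c fz az ez bz az dz bz cz in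
  (1 - Q ^ 2) * Pxx + 2 * P * Q * Pzx - (1 + P ^ 2) * Pzz = 0.
Proof.
  intros HJ E1 E2 E3 J g1x g2x g1z g2z N1 N2 N3 E F G L M N Hnum P Q ax az bx bz cx cz dx dz ex ez fx fz Pxx Pzx Pzz.
  subst xvu yvu zvu.
  assert (Hid : ((1 - Q ^ 2) * Pxx + 2 * P * Q * Pzx - (1 + P ^ 2) * Pzz) * J ^ 3 = E * N - 2 * F * M + G * L).
  { subst J g1x g2x g1z g2z N1 N2 N3 E F G L M N P Q ax az bx bz cx cz dx dz ex ez fx fz Pxx Pzx Pzz.
    unfold ratio_d. field. exact HJ. }
  rewrite Hnum in Hid.
  apply Rmult_integral in Hid. destruct Hid as [H|H]; [exact H|].
  exfalso. apply (pow_nonzero J 3) in HJ. contradiction.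
Qed.


Lemma is_derive_mult' (f g : R -> R) x df dg :
  is_derive f x df -> is_derive g x dg -> is_derive (fun t => f t * g t) x (df * g x + f x * dg).
Proof. intros Hf Hg. apply (is_derive_mult f g x df dg Hf Hg). intros; apply Rmult_comm. Qed.

Lemma is_derive_minus' (f g : R -> R) x df dg :
  is_derive f x df -> is_derive g x dg -> is_derive (fun t => f t - g t) x (df - dg).
Proof. intros Hf Hg. apply (is_derive_minus f g x df dg Hf Hg). Qed.

Lemma is_derive_eq (f : R -> R) x l l' : is_derive f x l -> l = l' -> is_derive f x l'.
Proof. intros H E; subst; exact H. Qed.

Lemma is_derive_ratio (A B C D E F G H : R -> R) t0 A' B' C' D' E' F' G' H' :
  is_derive A t0 A' -> is_derive B t0 B' -> is_derive C t0 C' -> is_derive D t0 D' ->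
  is_derive E t0 E' -> is_derive F t0 F' -> is_derive G t0 G' -> is_derive H t0 H' ->
  E t0 * F t0 - G t0 * H t0 <> 0 ->
  is_derive (fun t => (A t * B t - C t * D t) / (E t * F t - G t * H t)) t0
    (ratio_d (A t0) (B t0) (C t0) (D t0) (E t0) (F t0) (G t0) (H t0) A' B' C' D' E' F' G' H').
Proof.
  intros hA hB hC hD hE hF hG hH hJ.
  assert (hN := is_derive_minus' _ _ _ _ _ (is_derive_mult' A B t0 A' B' hA hB) (is_derive_mult' C D t0 C' D' hC hD)).
  assert (hM := is_derive_minus' _ _ _ _ _ (is_derive_mult' E F t0 E' F' hE hF) (is_derive_mult' G H t0 G' H' hG hH)).
  exact (is_derive_div _ _ t0 _ _ hN hM hJ).
Qed.
Lemma cont_comp2 (f g1 g2 : R -> R -> R) x y :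
  continuity_2d_pt f (g1 x y) (g2 x y) -> continuity_2d_pt g1 x y -> continuity_2d_pt g2 x y ->
  continuity_2d_pt (fun u v => f (g1 u v) (g2 u v)) x y.
Proof.
  intros Hf H1 H2 eps. destruct (Hf eps) as [d Hd].
  destruct (H1 d) as [d1 Hd1]. destruct (H2 d) as [d2 Hd2].
  assert (Hm : 0 < Rmin d1 d2) by (apply Rmin_pos; apply cond_pos).
  exists (mkposreal _ Hm). simpl. intros u v Hu Hv.
  apply Hd; [apply Hd1|apply Hd2]; eapply Rlt_le_trans; eauto; try apply Rmin_l; apply Rmin_r.
Qed.

Ltac cont2d := repeat first [ apply continuity_2d_pt_plus | apply continuity_2d_pt_minus
  | apply continuity_2d_pt_mult | apply continuity_2d_pt_opp | apply continuity_2d_pt_const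
  | assumption ].

Lemma cont_ratio (A B C D E F G H A' B' C' D' E' F' G' H' : R -> R -> R) x y :
  continuity_2d_pt A x y -> continuity_2d_pt B x y -> continuity_2d_pt C x y -> continuity_2d_pt D x y ->
  continuity_2d_pt E x y -> continuity_2d_pt F x y -> continuity_2d_pt G x y -> continuity_2d_pt H x y ->
  continuity_2d_pt A' x y -> continuity_2d_pt B' x y -> continuity_2d_pt C' x y -> continuity_2d_pt D' x y ->
  continuity_2d_pt E' x y -> continuity_2d_pt F' x y -> continuity_2d_pt G' x y -> continuity_2d_pt H' x y ->
  E x y * F x y - G x y * H x y <> 0 ->
  continuity_2d_pt (fun u v => ratio_d (A u v) (B u v) (C u v) (D u v) (E u v) (F u v) (G u v) (H u v)
     (A' u v) (B' u v) (C' u v) (D' u v) (E' u v) (F' u v) (G' u v) (H' u v)) x y.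
Proof.
  intros. unfold ratio_d, Rdiv. simpl pow. rewrite ?Rmult_1_r.
  apply continuity_2d_pt_mult. cont2d.
  apply continuity_2d_pt_inv. cont2d.
  apply Rmult_integral_contrapositive; split; auto.
Qed.

Lemma cont_quot (A B C D E F G H : R -> R -> R) x y :
  continuity_2d_pt A x y -> continuity_2d_pt B x y -> continuity_2d_pt C x y -> continuity_2d_pt D x y ->
  continuity_2d_pt E x y -> continuity_2d_pt F x y -> continuity_2d_pt G x y -> continuity_2d_pt H x y ->
  E x y * F x y - G x y * H x y <> 0 ->
  continuity_2d_pt (fun u v => (A u v * B u v - C u v * D u v) / (E u v * F u v - G u v * H u v)) x y.
Proof.
  intros. unfold Rdiv. apply continuity_2d_pt_mult. cont2d.
  apply continuity_2d_pt_inv. cont2d. auto.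
Qed.


Lemma smooth_C1 U g : smooth_on U g -> Ck 1 U g /\ Ck 1 U (d1 g) /\ Ck 1 U (d2 g).
Proof.
  intros H. destruct (H 2%nat) as [_ [_ [A B]]]. split; [|split; assumption].
  apply (Ck_le 1 2); auto.
Qed.

Lemma locally_2d_impl (P Q : R -> R -> Prop) x y :
  locally_2d P x y -> (forall u v, P u v -> Q u v) -> locally_2d Q x y.
Proof. intros [d H] HPQ. exists d. intros. apply HPQ, H; auto. Qed.

Lemma diffC1 U h u v : open2 U -> Ck 1 U h -> U u v ->
  differentiable_pt_lim h u v (d1 h u v) (d2 h u v).
Proof.
  intros HU Hh Huv. destruct (C1_of U h Hh u v Huv) as [_ _ _ c1 c2].
  apply diff_of_partials; auto.
  apply (locally_2d_impl U). apply open2_loc; auto.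
  intros u' v' H. destruct (C1_of U h Hh u' v' H). auto.
Qed.

Lemma schwarz_U U g u v : open2 U -> smooth_on U g -> U u v -> d1 (d2 g) u v = d2 (d1 g) u v.
Proof.
  intros HU Hg Huv. destruct (smooth_C1 U g Hg) as [H0 [H1 H2]].
  apply Schwarz.
  - apply (locally_2d_impl U). apply open2_loc; auto.
    intros u' v' H. destruct (C1_of U g H0 u' v' H). destruct (C1_of U _ H1 u' v' H).
    destruct (C1_of U _ H2 u' v' H). auto.
  - exact (c1_cd1 _ _ _ (C1_of U _ H2 u v Huv)).
  - exact (c1_cd2 _ _ _ (C1_of U _ H1 u v Huv)).
Qed.

Definition Jf (X Z : R -> R -> R) u v := d1 X u v * d2 Z u v - d2 X u v * d1 Z u v.

Lemma deriv_ext1 (D : R -> R -> Prop) (f Phi G1 G2 : R -> R -> R) x z l :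
  open2 D -> D x z -> (forall x' z', D x' z' -> f x' z' = Phi (G1 x' z') (G2 x' z')) ->
  is_derive (fun t => Phi (G1 t z) (G2 t z)) x l -> is_derive (fun t => f t z) x l.
Proof.
  intros HD Hxz Hf Hd. apply (is_derive_ext_loc (fun t => Phi (G1 t z) (G2 t z))); auto.
  apply (locally_2d_1d_const_y (fun a b => Phi (G1 a b) (G2 a b) = f a b)).
  apply (locally_2d_impl D). apply open2_loc; auto. intros; symmetry; auto.
Qed.

Lemma deriv_ext2 (D : R -> R -> Prop) (f Phi G1 G2 : R -> R -> R) x z l :
  open2 D -> D x z -> (forall x' z', D x' z' -> f x' z' = Phi (G1 x' z') (G2 x' z')) ->
  is_derive (fun t => Phi (G1 x t) (G2 x t)) z l -> is_derive (fun t => f x t) z l.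
Proof.
  intros HD Hxz Hf Hd. apply (is_derive_ext_loc (fun t => Phi (G1 x t) (G2 x t))); auto.
  apply (locally_2d_1d_const_x (fun a b => Phi (G1 a b) (G2 a b) = f a b)).
  apply (locally_2d_impl D). apply open2_loc; auto. intros; symmetry; auto.
Qed.

Lemma cont_ext (D : R -> R -> Prop) (f Phi G1 G2 : R -> R -> R) x z :
  open2 D -> D x z -> (forall x' z', D x' z' -> f x' z' = Phi (G1 x' z') (G2 x' z')) ->
  continuity_2d_pt (fun a b => Phi (G1 a b) (G2 a b)) x z -> continuity_2d_pt f x z.
Proof.
  intros HD Hxz Hf Hc. apply (continuity_2d_pt_ext_loc (fun a b => Phi (G1 a b) (G2 a b))); auto.
  apply (locally_2d_impl D). apply open2_loc; auto. intros; symmetry; auto.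
Qed.


Definition g1x (X Z : R -> R -> R) u v := d2 Z u v / Jf X Z u v.
Definition g2x (X Z : R -> R -> R) u v := - d1 Z u v / Jf X Z u v.
Definition g1z (X Z : R -> R -> R) u v := - d2 X u v / Jf X Z u v.
Definition g2z (X Z : R -> R -> R) u v := d1 X u v / Jf X Z u v.
Definition Dx X Z (h : R -> R -> R) u v := d1 h u v * g1x X Z u v + d2 h u v * g2x X Z u v.
Definition Dz X Z (h : R -> R -> R) u v := d1 h u v * g1z X Z u v + d2 h u v * g2z X Z u v.
Definition Px (X Y Z : R -> R -> R) u v :=
  (d1 Y u v * d2 Z u v - d2 Y u v * d1 Z u v) / (d1 X u v * d2 Z u v - d2 X u v * d1 Z u v).
Definition Pz (X Y Z : R -> R -> R) u v :=
  (d2 Y u v * d1 X u v - d1 Y u v * d2 X u v) / (d1 X u v * d2 Z u v - d2 X u v * d1 Z u v).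
Definition Pxx (X Y Z : R -> R -> R) u v :=
  ratio_d (d1 Y u v) (d2 Z u v) (d2 Y u v) (d1 Z u v) (d1 X u v) (d2 Z u v) (d2 X u v) (d1 Z u v)
   (Dx X Z (d1 Y) u v) (Dx X Z (d2 Z) u v) (Dx X Z (d2 Y) u v) (Dx X Z (d1 Z) u v)
   (Dx X Z (d1 X) u v) (Dx X Z (d2 Z) u v) (Dx X Z (d2 X) u v) (Dx X Z (d1 Z) u v).
Definition Pxz (X Y Z : R -> R -> R) u v :=
  ratio_d (d1 Y u v) (d2 Z u v) (d2 Y u v) (d1 Z u v) (d1 X u v) (d2 Z u v) (d2 X u v) (d1 Z u v)
   (Dz X Z (d1 Y) u v) (Dz X Z (d2 Z) u v) (Dz X Z (d2 Y) u v) (Dz X Z (d1 Z) u v)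
   (Dz X Z (d1 X) u v) (Dz X Z (d2 Z) u v) (Dz X Z (d2 X) u v) (Dz X Z (d1 Z) u v).
Definition Pzx (X Y Z : R -> R -> R) u v :=
  ratio_d (d2 Y u v) (d1 X u v) (d1 Y u v) (d2 X u v) (d1 X u v) (d2 Z u v) (d2 X u v) (d1 Z u v)
   (Dx X Z (d2 Y) u v) (Dx X Z (d1 X) u v) (Dx X Z (d1 Y) u v) (Dx X Z (d2 X) u v)
   (Dx X Z (d1 X) u v) (Dx X Z (d2 Z) u v) (Dx X Z (d2 X) u v) (Dx X Z (d1 Z) u v).
Definition Pzz (X Y Z : R -> R -> R) u v :=
  ratio_d (d2 Y u v) (d1 X u v) (d1 Y u v) (d2 X u v) (d1 X u v) (d2 Z u v) (d2 X u v) (d1 Z u v)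
   (Dz X Z (d2 Y) u v) (Dz X Z (d1 X) u v) (Dz X Z (d1 Y) u v) (Dz X Z (d2 X) u v)
   (Dz X Z (d1 X) u v) (Dz X Z (d2 Z) u v) (Dz X Z (d2 X) u v) (Dz X Z (d1 Z) u v).

Lemma bi_at X Y Z U u v : open2 U -> smooth_on U X -> smooth_on U Y -> smooth_on U Z -> U u v ->
  timelike_at X Y Z u v -> mean_curv X Y Z u v = 0 -> Jf X Z u v <> 0 ->
  (1 - Pz X Y Z u v ^ 2) * Pxx X Y Z u v + 2 * Px X Y Z u v * Pz X Y Z u v * Pzx X Y Z u v
  - (1 + Px X Y Z u v ^ 2) * Pzz X Y Z u v = 0.
Proof.
  intros HU HX HY HZ Huv Ht Hm HJ.
  assert (Hn := H_num X Y Z u v Ht Hm).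
  assert (SX := schwarz_U U X u v HU HX Huv).
  assert (SY := schwarz_U U Y u v HU HY Huv).
  assert (SZ := schwarz_U U Z u v HU HZ Huv).
  unfold Jf in HJ.
  exact (bi_alg (d1 X u v) (d2 X u v) (d1 Z u v) (d2 Z u v) (d1 Y u v) (d2 Y u v)
    (d1 (d1 X) u v) (d2 (d1 X) u v) (d1 (d2 X) u v) (d2 (d2 X) u v)
    (d1 (d1 Y) u v) (d2 (d1 Y) u v) (d1 (d2 Y) u v) (d2 (d2 Y) u v)
    (d1 (d1 Z) u v) (d2 (d1 Z) u v) (d1 (d2 Z) u v) (d2 (d2 Z) u v) HJ SX SY SZ Hn).
Qed.


Lemma bi_of_inverse (X Y Z : R -> R -> R) (U D : R -> R -> Prop) (G1 G2 : R -> R -> R) K :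
  open2 U -> smooth_on U X -> smooth_on U Y -> smooth_on U Z ->
  (forall u v, U u v -> timelike_at X Y Z u v /\ mean_curv X Y Z u v = 0) ->
  open2 D -> 0 <= K ->
  (forall x z, D x z -> U (G1 x z) (G2 x z) /\ Jf X Z (G1 x z) (G2 x z) <> 0 /\
      X (G1 x z) (G2 x z) = x /\ Z (G1 x z) (G2 x z) = z) ->
  (forall x z x' z', D x z -> D x' z' ->
      Rabs (G1 x z - G1 x' z') + Rabs (G2 x z - G2 x' z') <= K * (Rabs (x - x') + Rabs (z - z'))) ->
  born_infeld D (fun x z => Y (G1 x z) (G2 x z)).
Proof.
  intros HU HX HY HZ HH HD HK HG HL.
  set (psi := fun x z => Y (G1 x z) (G2 x z)).
  destruct (smooth_C1 U X HX) as [CX [CX1 CX2]].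
  destruct (smooth_C1 U Y HY) as [CY [CY1 CY2]].
  destruct (smooth_C1 U Z HZ) as [CZ [CZ1 CZ2]].
  assert (HGc : forall x z, D x z -> continuity_2d_pt G1 x z /\ continuity_2d_pt G2 x z).
  { intros x z Hxz. destruct (open2_loc D x z HD Hxz) as [d0 Hd0].
    split; intros eps;
    (assert (He : 0 < Rmin d0 (eps / (2 * K + 2))) by
      (apply Rmin_pos; [apply cond_pos|apply Rdiv_lt_0_compat; [apply cond_pos|lra]]));
    exists (mkposreal _ He); simpl; intros u v Hu Hv;
    (assert (Hu0 : Rabs (u - x) < d0) by (eapply Rlt_le_trans; [exact Hu|apply Rmin_l]));
    (assert (Hv0 : Rabs (v - z) < d0) by (eapply Rlt_le_trans; [exact Hv|apply Rmin_l]));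
    (assert (Hu1 : Rabs (u - x) < eps / (2 * K + 2)) by (eapply Rlt_le_trans; [exact Hu|apply Rmin_r]));
    (assert (Hv1 : Rabs (v - z) < eps / (2 * K + 2)) by (eapply Rlt_le_trans; [exact Hv|apply Rmin_r]));
    assert (L := HL u v x z (Hd0 u v Hu0 Hv0) Hxz);
    assert (P1 := Rabs_pos (G1 u v - G1 x z)); assert (P2 := Rabs_pos (G2 u v - G2 x z));
    assert (Hep := cond_pos eps);
    (assert (Hq : (2 * K + 2) * (eps / (2 * K + 2)) = eps) by (field; lra));
    (assert (Hs : K * (Rabs (u - x) + Rabs (v - z)) < eps) by
      (assert (P3 := Rabs_pos (u - x)); assert (P4 := Rabs_pos (v - z)); nra)); lra. }
  assert (HdG : forall x z, D x z ->
     is_derive (fun t => G1 t z) x (g1x X Z (G1 x z) (G2 x z)) /\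
     is_derive (fun t => G2 t z) x (g2x X Z (G1 x z) (G2 x z)) /\
     is_derive (fun t => G1 x t) z (g1z X Z (G1 x z) (G2 x z)) /\
     is_derive (fun t => G2 x t) z (g2z X Z (G1 x z) (G2 x z))).
  { intros x z Hxz. destruct (HG x z Hxz) as [HUp [HJp [EX EZ]]].
    assert (dX := diffC1 U X _ _ HU CX HUp). assert (dZ := diffC1 U Z _ _ HU CZ HUp).
    assert (HDl := open2_loc D x z HD Hxz).
    assert (Lx := locally_2d_1d_const_y D x z HDl).
    assert (Lz := locally_2d_1d_const_x D x z HDl).
    destruct (inv_deriv X Z (fun t => G1 t z) (fun t => G2 t z) x _ _ _ _ 1 0 K dX dZ HJp HK)
      as [A1 A2].
    { eapply filter_imp; [|exact Lx]. intros t Ht. simpl.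
      destruct (HG t z Ht) as [_ [_ [E1 E2]]]. rewrite E1, E2, EX, EZ.
      split; [lra|]. split; [lra|].
      assert (h := HL t z x z Ht Hxz). rewrite Rminus_eq_0, Rabs_R0, Rplus_0_r in h. exact h. }
    destruct (inv_deriv X Z (fun t => G1 x t) (fun t => G2 x t) z _ _ _ _ 0 1 K dX dZ HJp HK)
      as [A3 A4].
    { eapply filter_imp; [|exact Lz]. intros t Ht. simpl.
      destruct (HG x t Ht) as [_ [_ [E1 E2]]]. rewrite E1, E2, EX, EZ.
      split; [lra|]. split; [lra|].
      assert (h := HL x t x z Ht Hxz). rewrite Rminus_eq_0, Rabs_R0, Rplus_0_l in h. exact h. }
    unfold Jf in HJp.
    unfold g1x, g2x, g1z, g2z, Jf.
    rewrite !Rmult_1_r, !Rmult_0_r, !Rminus_0_r, !Rminus_0_l in *. auto.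
  }
  assert (HS3x : forall h, Ck 1 U h -> forall x z, D x z ->
     is_derive (fun t => h (G1 t z) (G2 t z)) x (Dx X Z h (G1 x z) (G2 x z))).
  { intros h Ch x z Hxz. destruct (HdG x z Hxz) as [A1 [A2 _]].
    destruct (HG x z Hxz) as [HUp _].
    exact (chain h _ _ x _ _ _ _ (diffC1 U h _ _ HU Ch HUp) A1 A2). }
  assert (HS3z : forall h, Ck 1 U h -> forall x z, D x z ->
     is_derive (fun t => h (G1 x t) (G2 x t)) z (Dz X Z h (G1 x z) (G2 x z))).
  { intros h Ch x z Hxz. destruct (HdG x z Hxz) as [_ [_ [A3 A4]]].
    destruct (HG x z Hxz) as [HUp _].
    exact (chain h _ _ z _ _ _ _ (diffC1 U h _ _ HU Ch HUp) A3 A4). }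
  assert (EPx : forall u v, Jf X Z u v <> 0 -> Dx X Z Y u v = Px X Y Z u v).
  { intros u v hJ. unfold Jf in hJ. unfold Dx, Px, g1x, g2x, Jf. field. exact hJ. }
  assert (EPz : forall u v, Jf X Z u v <> 0 -> Dz X Z Y u v = Pz X Y Z u v).
  { intros u v hJ. unfold Jf in hJ. unfold Dz, Pz, g1z, g2z, Jf. field. exact hJ. }
  assert (D1 : forall x z, D x z -> is_derive (fun t => psi t z) x (Px X Y Z (G1 x z) (G2 x z))).
  { intros x z Hxz. rewrite <- EPx by (apply HG; exact Hxz). apply HS3x; auto. }
  assert (D2 : forall x z, D x z -> is_derive (fun t => psi x t) z (Pz X Y Z (G1 x z) (G2 x z))).
  { intros x z Hxz. rewrite <- EPz by (apply HG; exact Hxz). apply HS3z; auto. }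
  assert (F1 : forall x z, D x z -> d1 psi x z = Px X Y Z (G1 x z) (G2 x z)).
  { intros x z Hxz. apply is_derive_unique. apply D1; auto. }
  assert (F2 : forall x z, D x z -> d2 psi x z = Pz X Y Z (G1 x z) (G2 x z)).
  { intros x z Hxz. apply is_derive_unique. apply D2; auto. }
  assert (Dxx : forall x z, D x z -> is_derive (fun t => d1 psi t z) x (Pxx X Y Z (G1 x z) (G2 x z))).
  { intros x z Hxz. apply (deriv_ext1 D (d1 psi) (Px X Y Z) G1 G2 x z); [exact HD|exact Hxz|exact F1|].
    unfold Px, Pxx. apply (is_derive_ratio (fun t => (d1 Y) (G1 t z) (G2 t z)) (fun t => (d2 Z) (G1 t z) (G2 t z)) (fun t => (d2 Y) (G1 t z) (G2 t z)) (fun t => (d1 Z) (G1 t z) (G2 t z)) (fun t => (d1 X) (G1 t z) (G2 t z)) (fun t => (d2 Z) (G1 t z) (G2 t z)) (fun t => (d2 X) (G1 t z) (G2 t z)) (fun t => (d1 Z) (G1 t z) (G2 t z)) x); try (apply HS3x; [assumption|exact Hxz]). apply HG; exact Hxz. }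
  assert (Dxz : forall x z, D x z -> is_derive (fun t => d1 psi x t) z (Pxz X Y Z (G1 x z) (G2 x z))).
  { intros x z Hxz. apply (deriv_ext2 D (d1 psi) (Px X Y Z) G1 G2 x z); [exact HD|exact Hxz|exact F1|].
    unfold Px, Pxz. apply (is_derive_ratio (fun t => (d1 Y) (G1 x t) (G2 x t)) (fun t => (d2 Z) (G1 x t) (G2 x t)) (fun t => (d2 Y) (G1 x t) (G2 x t)) (fun t => (d1 Z) (G1 x t) (G2 x t)) (fun t => (d1 X) (G1 x t) (G2 x t)) (fun t => (d2 Z) (G1 x t) (G2 x t)) (fun t => (d2 X) (G1 x t) (G2 x t)) (fun t => (d1 Z) (G1 x t) (G2 x t)) z); try (apply HS3z; [assumption|exact Hxz]). apply HG; exact Hxz. }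
  assert (Dzx : forall x z, D x z -> is_derive (fun t => d2 psi t z) x (Pzx X Y Z (G1 x z) (G2 x z))).
  { intros x z Hxz. apply (deriv_ext1 D (d2 psi) (Pz X Y Z) G1 G2 x z); [exact HD|exact Hxz|exact F2|].
    unfold Pz, Pzx. apply (is_derive_ratio (fun t => (d2 Y) (G1 t z) (G2 t z)) (fun t => (d1 X) (G1 t z) (G2 t z)) (fun t => (d1 Y) (G1 t z) (G2 t z)) (fun t => (d2 X) (G1 t z) (G2 t z)) (fun t => (d1 X) (G1 t z) (G2 t z)) (fun t => (d2 Z) (G1 t z) (G2 t z)) (fun t => (d2 X) (G1 t z) (G2 t z)) (fun t => (d1 Z) (G1 t z) (G2 t z)) x); try (apply HS3x; [assumption|exact Hxz]). apply HG; exact Hxz. }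
  assert (Dzz : forall x z, D x z -> is_derive (fun t => d2 psi x t) z (Pzz X Y Z (G1 x z) (G2 x z))).
  { intros x z Hxz. apply (deriv_ext2 D (d2 psi) (Pz X Y Z) G1 G2 x z); [exact HD|exact Hxz|exact F2|].
    unfold Pz, Pzz. apply (is_derive_ratio (fun t => (d2 Y) (G1 x t) (G2 x t)) (fun t => (d1 X) (G1 x t) (G2 x t)) (fun t => (d1 Y) (G1 x t) (G2 x t)) (fun t => (d2 X) (G1 x t) (G2 x t)) (fun t => (d1 X) (G1 x t) (G2 x t)) (fun t => (d2 Z) (G1 x t) (G2 x t)) (fun t => (d2 X) (G1 x t) (G2 x t)) (fun t => (d1 Z) (G1 x t) (G2 x t)) z); try (apply HS3z; [assumption|exact Hxz]). apply HG; exact Hxz. }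
  assert (Fxx : forall x z, D x z -> d1 (d1 psi) x z = Pxx X Y Z (G1 x z) (G2 x z)).
  { intros x z Hxz. apply is_derive_unique. apply Dxx; auto. }
  assert (Fxz : forall x z, D x z -> d2 (d1 psi) x z = Pxz X Y Z (G1 x z) (G2 x z)).
  { intros x z Hxz. apply is_derive_unique. apply Dxz; auto. }
  assert (Fzx : forall x z, D x z -> d1 (d2 psi) x z = Pzx X Y Z (G1 x z) (G2 x z)).
  { intros x z Hxz. apply is_derive_unique. apply Dzx; auto. }
  assert (Fzz : forall x z, D x z -> d2 (d2 psi) x z = Pzz X Y Z (G1 x z) (G2 x z)).
  { intros x z Hxz. apply is_derive_unique. apply Dzz; auto. }
  assert (Hcont : forall x z, D x z ->
    continuity_2d_pt psi x z /\ continuity_2d_pt (d1 psi) x z /\ continuity_2d_pt (d2 psi) x z /\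
    continuity_2d_pt (d1 (d1 psi)) x z /\ continuity_2d_pt (d2 (d1 psi)) x z /\
    continuity_2d_pt (d1 (d2 psi)) x z /\ continuity_2d_pt (d2 (d2 psi)) x z).
  { intros x z Hxz. destruct (HG x z Hxz) as [HUp [HJp _]]. destruct (HGc x z Hxz) as [cG1 cG2].
    set (u := G1 x z) in *. set (v := G2 x z) in *.
    destruct (C1_of U X CX u v HUp) as [cX _ _ cX1 cX2].
    destruct (C1_of U Y CY u v HUp) as [cY _ _ cY1 cY2].
    destruct (C1_of U Z CZ u v HUp) as [cZ _ _ cZ1 cZ2].
    destruct (C1_of U _ CX1 u v HUp) as [_ _ _ cX11 cX12].
    destruct (C1_of U _ CX2 u v HUp) as [_ _ _ cX21 cX22].
    destruct (C1_of U _ CY1 u v HUp) as [_ _ _ cY11 cY12].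
    destruct (C1_of U _ CY2 u v HUp) as [_ _ _ cY21 cY22].
    destruct (C1_of U _ CZ1 u v HUp) as [_ _ _ cZ11 cZ12].
    destruct (C1_of U _ CZ2 u v HUp) as [_ _ _ cZ21 cZ22].
    assert (cJ : continuity_2d_pt (Jf X Z) u v) by (unfold Jf; cont2d).
    assert (cJi : continuity_2d_pt (fun a b => / Jf X Z a b) u v) by (apply continuity_2d_pt_inv; auto).
    assert (cg1x : continuity_2d_pt (g1x X Z) u v) by (unfold g1x, Rdiv; cont2d).
    assert (cg2x : continuity_2d_pt (g2x X Z) u v) by (unfold g2x, Rdiv; cont2d).
    assert (cg1z : continuity_2d_pt (g1z X Z) u v) by (unfold g1z, Rdiv; cont2d).
    assert (cg2z : continuity_2d_pt (g2z X Z) u v) by (unfold g2z, Rdiv; cont2d).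
    assert (cDx : forall h, continuity_2d_pt (d1 h) u v -> continuity_2d_pt (d2 h) u v ->
       continuity_2d_pt (Dx X Z h) u v) by (intros; unfold Dx; cont2d).
    assert (cDz : forall h, continuity_2d_pt (d1 h) u v -> continuity_2d_pt (d2 h) u v ->
       continuity_2d_pt (Dz X Z h) u v) by (intros; unfold Dz; cont2d).
    unfold Jf in HJp.
    split. { unfold psi. apply cont_comp2; auto. }
    split. { apply (cont_ext D _ (Px X Y Z) G1 G2 x z HD Hxz F1). apply cont_comp2; auto.
             unfold Px. apply cont_quot; auto. }
    split. { apply (cont_ext D _ (Pz X Y Z) G1 G2 x z HD Hxz F2). apply cont_comp2; auto.
             unfold Pz. apply cont_quot; auto. }
    split. { apply (cont_ext D _ (Pxx X Y Z) G1 G2 x z HD Hxz Fxx). apply cont_comp2; auto.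
             unfold Pxx. apply cont_ratio; auto. }
    split. { apply (cont_ext D _ (Pxz X Y Z) G1 G2 x z HD Hxz Fxz). apply cont_comp2; auto.
             unfold Pxz. apply cont_ratio; auto. }
    split. { apply (cont_ext D _ (Pzx X Y Z) G1 G2 x z HD Hxz Fzx). apply cont_comp2; auto.
             unfold Pzx. apply cont_ratio; auto. }
    { apply (cont_ext D _ (Pzz X Y Z) G1 G2 x z HD Hxz Fzz). apply cont_comp2; auto.
      unfold Pzz. apply cont_ratio; auto. } }
  split.
  - split; [|split; [|split]].
    + intros u v Huv. apply cont_2d'. apply Hcont; auto.
    + intros u v Huv. split; eexists; [apply D1|apply D2]; auto.
    + split; [|split; [|split]].
      * intros u v Huv. apply cont_2d'. apply Hcont; auto.
      * intros u v Huv. split; eexists; [apply Dxx|apply Dxz]; auto.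
      * intros u v Huv. apply cont_2d'. apply Hcont; auto.
      * intros u v Huv. apply cont_2d'. apply Hcont; auto.
    + split; [|split; [|split]].
      * intros u v Huv. apply cont_2d'. apply Hcont; auto.
      * intros u v Huv. split; eexists; [apply Dzx|apply Dzz]; auto.
      * intros u v Huv. apply cont_2d'. apply Hcont; auto.
      * intros u v Huv. apply cont_2d'. apply Hcont; auto.
  - intros x z Hxz. fold psi.
    rewrite (F1 x z Hxz), (F2 x z Hxz), (Fxx x z Hxz), (Fzx x z Hxz), (Fzz x z Hxz).
    destruct (HG x z Hxz) as [HUp [HJp _]]. destruct (HH _ _ HUp) as [Ht Hm].
    apply (bi_at X Y Z U); auto.
Qed.


Lemma abs_tri a b c : Rabs (a - c) <= Rabs (a - b) + Rabs (b - c).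
Proof.
  replace (a - c) with ((a - b) + (b - c)) by ring. apply Rabs_triang.
Qed.

Lemma main_case (X Y Z : R -> R -> R) (U : R -> R -> Prop) u0 v0 :
  open2 U -> smooth_on U X -> smooth_on U Y -> smooth_on U Z ->
  (forall u v, U u v -> timelike_at X Y Z u v /\ mean_curv X Y Z u v = 0) ->
  U u0 v0 -> d1 X u0 v0 * d2 Z u0 v0 - d2 X u0 v0 * d1 Z u0 v0 <> 0 ->
  exists W : R -> R -> Prop,
    open2 W /\ W u0 v0 /\ (forall u v, W u v -> U u v) /\
    (exists (D : R -> R -> Prop) (psi : R -> R -> R),
         open2 D /\ born_infeld D psi /\
         forall x y z,
           (exists u v, W u v /\ X u v = x /\ Y u v = y /\ Z u v = z) <->
           (D x z /\ y = psi x z)).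
Proof.
  intros HU HX HY HZ HH H0 HJ.
  destruct (smooth_C1 U X HX) as [CX _]. destruct (smooth_C1 U Z HZ) as [CZ _].
  destruct (ift X Z U u0 v0 HU CX CZ H0 HJ) as [r [dl [K [G1 [G2 [Hr [Hdl [HK [Hbox [Hex Hlow]]]]]]]]]].
  set (x0 := X u0 v0) in *. set (z0 := Z u0 v0) in *.
  set (D := fun x z => Rabs (x - x0) < dl /\ Rabs (z - z0) < dl).
  set (W := fun u v => Rabs (u - u0) + Rabs (v - v0) < r /\ Rabs (X u v - x0) < dl /\ Rabs (Z u v - z0) < dl).
  assert (Hsb : forall u v, Rabs (u - u0) + Rabs (v - v0) < r -> Rabs (u - u0) < r /\ Rabs (v - v0) < r).
  { intros u v h. assert (h1 := Rabs_pos (u - u0)). assert (h2 := Rabs_pos (v - v0)). lra. }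
  assert (HGD : forall x z, D x z -> U (G1 x z) (G2 x z) /\ Jf X Z (G1 x z) (G2 x z) <> 0 /\
      X (G1 x z) (G2 x z) = x /\ Z (G1 x z) (G2 x z) = z).
  { intros x z [Hx Hz]. destruct (Hex x z Hx Hz) as [Hn [E1 E2]].
    destruct (Hsb _ _ Hn) as [h1 h2]. destruct (Hbox _ _ h1 h2) as [HUp HJp].
    unfold Jf. auto. }
  assert (HLip : forall x z x' z', D x z -> D x' z' ->
      Rabs (G1 x z - G1 x' z') + Rabs (G2 x z - G2 x' z') <= K * (Rabs (x - x') + Rabs (z - z'))).
  { intros x z x' z' [Hx Hz] [Hx' Hz'].
    destruct (Hex x z Hx Hz) as [Hn [E1 E2]]. destruct (Hex x' z' Hx' Hz') as [Hn' [E1' E2']].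
    destruct (Hsb _ _ Hn) as [h1 h2]. destruct (Hsb _ _ Hn') as [h1' h2'].
    assert (L := Hlow _ _ _ _ h1 h2 h1' h2'). rewrite E1, E2, E1', E2' in L. exact L. }
  assert (Hinj : forall u v, W u v -> G1 (X u v) (Z u v) = u /\ G2 (X u v) (Z u v) = v).
  { intros u v [Hn [Hx Hz]]. destruct (Hex _ _ Hx Hz) as [Hn' [E1 E2]].
    destruct (Hsb _ _ Hn) as [h1 h2]. destruct (Hsb _ _ Hn') as [h1' h2'].
    assert (L := Hlow _ _ _ _ h1 h2 h1' h2'). rewrite E1, E2 in L.
    rewrite !Rminus_eq_0, Rabs_R0, Rplus_0_r, Rmult_0_r in L.
    assert (a1 := Rabs_pos (u - G1 (X u v) (Z u v))). assert (a2 := Rabs_pos (v - G2 (X u v) (Z u v))).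
    split.
    - assert (Rabs (u - G1 (X u v) (Z u v)) = 0) by lra. apply Rabs_eq_0 in H. lra.
    - assert (Rabs (v - G2 (X u v) (Z u v)) = 0) by lra. apply Rabs_eq_0 in H. lra. }
  assert (HDo : open2 D).
  { apply loc_open2. intros x z [Hx Hz].
    assert (He : 0 < Rmin (dl - Rabs (x - x0)) (dl - Rabs (z - z0))) by (apply Rmin_pos; lra).
    exists (mkposreal _ He). simpl. intros x' z' h1 h2.
    assert (m1 := Rmin_l (dl - Rabs (x - x0)) (dl - Rabs (z - z0))).
    assert (m2 := Rmin_r (dl - Rabs (x - x0)) (dl - Rabs (z - z0))).
    assert (t1 := abs_tri x' x x0). assert (t2 := abs_tri z' z z0).
    split; lra. }
  assert (HWU : forall u v, W u v -> U u v).
  { intros u v [Hn _]. destruct (Hsb _ _ Hn) as [h1 h2]. apply (Hbox _ _ h1 h2). }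
  exists W. split.
  { apply loc_open2. intros u v Hw. assert (HUw := HWU u v Hw). destruct Hw as [Hn [Hx Hz]].
    destruct (C1_of U X CX u v HUw) as [cX _ _ _ _]. destruct (C1_of U Z CZ u v HUw) as [cZ _ _ _ _].
    assert (e1 : 0 < dl - Rabs (X u v - x0)) by lra.
    assert (e2 : 0 < dl - Rabs (Z u v - z0)) by lra.
    assert (e3 : 0 < (r - (Rabs (u - u0) + Rabs (v - v0))) / 2) by lra.
    assert (L := locally_2d_and _ _ _ _ (cX (mkposreal _ e1)) (locally_2d_and _ _ _ _ (cZ (mkposreal _ e2))
       (ex_intro (fun d : posreal => forall u' v', Rabs (u' - u) < d -> Rabs (v' - v) < d -> True)
          (mkposreal _ e3) (fun _ _ _ _ => I)))).
    destruct L as [d Hd]. simpl in Hd.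
    assert (Hm : 0 < Rmin d ((r - (Rabs (u - u0) + Rabs (v - v0))) / 2)) by (apply Rmin_pos; [apply cond_pos|lra]).
    exists (mkposreal _ Hm). simpl. intros u' v' h1 h2.
    assert (m1 := Rmin_l d ((r - (Rabs (u - u0) + Rabs (v - v0))) / 2)).
    assert (m2 := Rmin_r d ((r - (Rabs (u - u0) + Rabs (v - v0))) / 2)).
    destruct (Hd u' v' ltac:(lra) ltac:(lra)) as [k1 [k2 _]].
    assert (t1 := abs_tri u' u u0). assert (t2 := abs_tri v' v v0).
    assert (t3 := abs_tri (X u' v') (X u v) x0). assert (t4 := abs_tri (Z u' v') (Z u v) z0).
    unfold W. split; [|split]; lra. }
  split.
  { unfold W. rewrite !Rminus_eq_0, Rabs_R0. split; [lra|split; lra]. }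
  split; [exact HWU|].
  exists D, (fun x z => Y (G1 x z) (G2 x z)). split; [exact HDo|]. split.
  { apply (bi_of_inverse X Y Z U D G1 G2 K); auto. }
  intros x y z. split.
  - intros [u [v [Hw [Ex [Ey Ez]]]]]. destruct (Hinj u v Hw) as [I1 I2].
    destruct Hw as [_ [Hx Hz]]. subst x y z. split; [split; auto|].
    rewrite I1, I2. reflexivity.
  - intros [Hxz Hy]. destruct (HGD x z Hxz) as [_ [_ [E1 E2]]].
    exists (G1 x z), (G2 x z). destruct Hxz as [Hx Hz].
    destruct (Hex x z Hx Hz) as [Hn _].
    split. { unfold W. rewrite E1, E2. auto. }
    auto.
Qed.


Lemma swap_facts (X Y Z : R -> R -> R) u v :
  (timelike_at Y X Z u v <-> timelike_at X Y Z u v) /\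
  mean_curv Y X Z u v = - mean_curv X Y Z u v.
Proof.
  assert (e1 : N1 X Z u v = - N2 X Z u v) by (unfold N1, N2; ring).
  assert (e2 : N2 Y Z u v = - N1 Y Z u v) by (unfold N1, N2; ring).
  assert (e3 : N3 Y X u v = - N3 X Y u v) by (unfold N3; ring).
  assert (en : nrm Y X Z u v = nrm X Y Z u v).
  { unfold nrm. rewrite e1, e2, e3. f_equal. f_equal. unfold lprod. ring. }
  assert (f1 : n1 Y X Z u v = - n2 X Y Z u v) by (unfold n1, n2; rewrite e1, en; unfold Rdiv; ring).
  assert (f2 : n2 Y X Z u v = - n1 X Y Z u v) by (unfold n1, n2; rewrite e2, en; unfold Rdiv; ring).
  assert (f3 : n3 Y X Z u v = - n3 X Y Z u v) by (unfold n3; rewrite e3, en; unfold Rdiv; ring).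
  assert (gE : E_ff Y X Z u v = E_ff X Y Z u v) by (unfold E_ff, lprod; ring).
  assert (gF : F_ff Y X Z u v = F_ff X Y Z u v) by (unfold F_ff, lprod; ring).
  assert (gG : G_ff Y X Z u v = G_ff X Y Z u v) by (unfold G_ff, lprod; ring).
  assert (gL : L_sf Y X Z u v = - L_sf X Y Z u v) by (unfold L_sf; rewrite f1, f2, f3; unfold lprod; ring).
  assert (gM : M_sf Y X Z u v = - M_sf X Y Z u v) by (unfold M_sf; rewrite f1, f2, f3; unfold lprod; ring).
  assert (gN : N_sf Y X Z u v = - N_sf X Y Z u v) by (unfold N_sf; rewrite f1, f2, f3; unfold lprod; ring).
  split.
  - unfold timelike_at. rewrite gE, gF, gG. tauto.
  - unfold mean_curv. rewrite gE, gF, gG, gL, gM, gN. unfold Rdiv. ring.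
Qed.

Theorem theorem2p1 (X Y Z : R -> R -> R) (U : R -> R -> Prop) :
  timelike_minimal_surface X Y Z U ->
  forall u0 v0, U u0 v0 ->
  exists W : R -> R -> Prop,
    open2 W /\ W u0 v0 /\ (forall u v, W u v -> U u v) /\
    ( (exists (D : R -> R -> Prop) (psi : R -> R -> R),
         open2 D /\ born_infeld D psi /\
         forall x y z,
           (exists u v, W u v /\ X u v = x /\ Y u v = y /\ Z u v = z) <->
           (D x z /\ y = psi x z))
    \/
      (exists (D : R -> R -> Prop) (psi : R -> R -> R),
         open2 D /\ born_infeld D psi /\
         forall x y z,
           (exists u v, W u v /\ X u v = x /\ Y u v = y /\ Z u v = z) <->
           (D y z /\ x = psi y z)) ).
Proof.
  intros [HU [HX [HY [HZ Hp]]]] u0 v0 H0.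
  assert (HH : forall u v, U u v -> timelike_at X Y Z u v /\ mean_curv X Y Z u v = 0).
  { intros u v Huv. destruct (Hp u v Huv) as [_ [A B]]. auto. }
  destruct (HH u0 v0 H0) as [Ht _].
  assert (Enn : N1 Y Z u0 v0 ^ 2 + N2 X Z u0 v0 ^ 2 - N3 X Y u0 v0 ^ 2 =
     - (E_ff X Y Z u0 v0 * G_ff X Y Z u0 v0 - F_ff X Y Z u0 v0 ^ 2)).
  { unfold N1, N2, N3, E_ff, F_ff, G_ff, lprod. ring. }
  unfold timelike_at in Ht.
  destruct (Req_dec (N2 X Z u0 v0) 0) as [HN2|HN2].
  -
    assert (HN1 : N1 Y Z u0 v0 <> 0).
    { intros h. rewrite h, HN2 in Enn. assert (0 <= N3 X Y u0 v0 ^ 2) by (apply pow2_ge_0). nra. }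
    assert (HH' : forall u v, U u v -> timelike_at Y X Z u v /\ mean_curv Y X Z u v = 0).
    { intros u v Huv. destruct (HH u v Huv) as [A B]. destruct (swap_facts X Y Z u v) as [S1 S2].
      split; [tauto|]. rewrite S2, B. ring. }
    destruct (main_case Y X Z U u0 v0 HU HY HX HZ HH' H0) as [W [HW1 [HW2 [HW3 [D [psi [HD1 [HD2 HD3]]]]]]]].
    { unfold N1 in HN1. intros h. apply HN1. lra. }
    exists W. split; [exact HW1|]. split; [exact HW2|]. split; [exact HW3|].
    right. exists D, psi. split; [exact HD1|]. split; [exact HD2|].
    intros x y z. rewrite <- (HD3 y x z). split.
    + intros [u [v [h1 [h2 [h3 h4]]]]]. exists u, v. auto.
    + intros [u [v [h1 [h2 [h3 h4]]]]]. exists u, v. auto.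
  - destruct (main_case X Y Z U u0 v0 HU HX HY HZ HH H0) as [W [HW1 [HW2 [HW3 HD]]]].
    { unfold N2 in HN2. intros h. apply HN2. lra. }
    exists W. split; [exact HW1|]. split; [exact HW2|]. split; [exact HW3|].
    left. exact HD.
Qed.
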